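(* Let $\Bbbk$ be a field of characteristic $\ne2$, $V$ a $3$-dimensional vector space over $\Bbbk$, $0\ne q\in\Bbbk$, and let $Y:V^{\otimes2}\to V^{\otimes2}$ be a linear operator with $\mathrm{Im}\,Y\subset\mathrm{Alt}_2$. Then $Y$ satisfies both (A) $Yw=(q+1)w$ for all $w\in\mathrm{Alt}_2$, and (B) $(\mathrm{Id}_V\otimes Y)(Y\otimes\mathrm{Id}_V)w-qw\in\mathrm{Alt}_3$ for all $w\in V\otimes\mathrm{Alt}_2$, if and only if there exist vectors $a,b\in V$ and a symmetric bilinear form $g:V\times V\to\Bbbk$ such that $(q-1)^2=-4\Delta$ with $\Delta=g(a,a)g(b,b)-g(a,b)^2$, and $$Y(xy)=g(x,y)\,a\wedge b+x\wedge Ty+y\wedge Tx+\frac{q+1}{2}\,x\wedge y\qquad(x,y\in V),$$ where $T:V\to V$ is given by $Tv=g(b,v)\,a-g(a,v)\,b$. Moreover, such an operator $Y$ also satisfies $$(\mathrm{Id}_V\otimes Y)(Y\otimes\mathrm{Id}_V)(\mathrm{Id}_V\otimes Y)-q(\mathrm{Id}_V\otimes Y)=(Y\otimes\mathrm{Id}_V)(\mathrm{Id}_V\otimes Y)(Y\otimes\mathrm{Id}_V)-q(Y\otimes\mathrm{Id}_V).$$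
   Context: For $x,y,z\in V$ write $xy=x\otimes y$, $xyz=x\otimes y\otimes z$, $x\wedge y=xy-yx$ and $x\wedge y\wedge z=xyz+yzx+zxy-zyx-xzy-yxz$. $\mathrm{Alt}_2=\mathrm{span}\{x\wedge y\}\subset V^{\otimes2}$ (the alternating tensors, dimension 3) and $\mathrm{Alt}_3=\mathrm{span}\{x\wedge y\wedge z\}\subset V^{\otimes 3}$ (dimension 1). *)

(* Defs.v *)
From HB Require Import structures.
From mathcomp Require Import all_boot all_order all_algebra.
Set Implicit Arguments. Unset Strict Implicit. Unset Printing Implicit Defensive.
Import Order.TTheory GRing.Theory Num.Theory.
Local Open Scope ring_scope.

(* The 3-dimensional space V is realised as k^3 (row vectors) with its
   standard basis; tensor powers are realised by coordinates. *)
Notation V k := 'rV[k]_3.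
Notation T2 k := {ffun 'I_3 * 'I_3 -> k^o}.
Notation T3 k := {ffun 'I_3 * 'I_3 * 'I_3 -> k^o}.

Section Tensors.
Variable k : fieldType.
Local Notation V := (V k).
Local Notation T2 := (T2 k).
Local Notation T3 := (T3 k).

Definition tens2 (x y : V) : T2 := [ffun ij => x ord0 ij.1 * y ord0 ij.2].
Definition tens3 (x y z : V) : T3 :=
  [ffun t => x ord0 t.1.1 * y ord0 t.1.2 * z ord0 t.2].
Definition tens12 (x : V) (u : T2) : T3 := [ffun t => x ord0 t.1.1 * u (t.1.2, t.2)].

Definition wedge2 (x y : V) : T2 := tens2 x y - tens2 y x.
Definition wedge3 (x y z : V) : T3 :=
  tens3 x y z + tens3 y z x + tens3 z x y
  - tens3 z y x - tens3 x z y - tens3 y x z.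

Definition Alt2 (w : T2) : Prop :=
  exists n (c : 'I_n -> k) (x y : 'I_n -> V),
    w = \sum_(i < n) c i *: wedge2 (x i) (y i).
Definition Alt3 (w : T3) : Prop :=
  exists n (c : 'I_n -> k) (x y z : 'I_n -> V),
    w = \sum_(i < n) c i *: wedge3 (x i) (y i) (z i).

Definition V_Alt2 (w : T3) : Prop :=
  exists n (x : 'I_n -> V) (u : 'I_n -> T2),
    (forall i, Alt2 (u i)) /\ w = \sum_(i < n) tens12 (x i) (u i).

Definition IdY (Y : T2 -> T2) (w : T3) : T3 :=
  [ffun t => Y [ffun jl : 'I_3 * 'I_3 => w (t.1.1, jl.1, jl.2)] (t.1.2, t.2)].
Definition YId (Y : T2 -> T2) (w : T3) : T3 :=
  [ffun t => Y [ffun ij : 'I_3 * 'I_3 => w (ij.1, ij.2, t.2)] (t.1.1, t.1.2)].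

End Tensors.

(* Main.v *)
Require Import Defs.
From HB Require Import structures.
From mathcomp Require Import all_boot all_order all_algebra.
From mathcomp Require Import ring.
Import GRing.Theory.
Set Implicit Arguments. Unset Strict Implicit.
Local Open Scope ring_scope.


Lemma scaleoE (k : fieldType) (c x : k) : (c *: (x : k^o)) = c * x.
Proof. by []. Qed.
Ltac kring k := rewrite ?scaleoE; match goal with |- @eq _ ?a ?b => change (@eq (GRing.Field.sort k) a b); ring end.

Notation i0 := (@Ordinal 3 0 isT).
Notation i1 := (@Ordinal 3 1 isT).
Notation i2 := (@Ordinal 3 2 isT).

Lemma sum3 (R : nmodType) (F : 'I_3 -> R) : \sum_(i < 3) F i = F i0 + F i1 + F i2.
Proof.
rewrite !big_ord_recl big_ord0 addr0 addrA.
have -> : lift ord0 (ord0 : 'I_2) = i1 by apply: val_inj.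
have -> : lift ord0 (lift ord0 (ord0 : 'I_1)) = i2 by apply: val_inj.
have -> : (ord0 : 'I_3) = i0 by apply: val_inj.
by [].
Qed.

Section M.
Variable k : fieldType.

Definition dl (i u : 'I_3) : k :=
  match nat_of_ord i, nat_of_ord u with 0%N,0%N | 1%N,1%N | 2%N,2%N => 1 | _,_ => 0 end.
Definition lv (f : nat -> k) (u v : 'I_3) : k :=
  match nat_of_ord u, nat_of_ord v with
  | 1%N,2%N => f 0%N | 2%N,1%N => - f 0%N | 2%N,0%N => f 1%N | 0%N,2%N => - f 1%N
  | 0%N,1%N => f 2%N | 1%N,0%N => - f 2%N | _,_ => 0 end.
Definition sv (s : nat -> nat -> nat -> k) (i j : 'I_3) (m : nat) : k :=
  match nat_of_ord i, nat_of_ord j with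
  | 1%N,0%N => s 0%N 1%N m | 2%N,0%N => s 0%N 2%N m | 2%N,1%N => s 1%N 2%N m | a,b => s a b m end.
Definition Kmod s h i j u v : k := lv (sv s i j) u v + h * (dl i u * dl j v - dl i v * dl j u).
Definition Ymod s h (w : T2 k) : T2 k :=
  [ffun p => \sum_(i<3) \sum_(j<3) w (i,j) * Kmod s h i j p.1 p.2].

Definition sL (c : nat -> k) (G : nat -> nat -> k) (i j m : nat) : k :=
  match i, j, m with
  | 0%N, 0%N, 0%N => c 0%N * G 0%N 0%N
  | 0%N, 0%N, 1%N => 2%:R * (c 0%N * G 0%N 1%N) - c 1%N * G 0%N 0%N
  | 0%N, 0%N, 2%N => 2%:R * (c 0%N * G 0%N 2%N) - c 2%N * G 0%N 0%N
  | 0%N, 1%N, 0%N => c 1%N * G 0%N 0%N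
  | 0%N, 1%N, 1%N => c 0%N * G 1%N 1%N
  | 0%N, 1%N, 2%N => c 0%N * G 1%N 2%N + c 1%N * G 0%N 2%N - c 2%N * G 0%N 1%N
  | 0%N, 2%N, 0%N => c 2%N * G 0%N 0%N
  | 0%N, 2%N, 1%N => c 0%N * G 1%N 2%N - c 1%N * G 0%N 2%N + c 2%N * G 0%N 1%N
  | 0%N, 2%N, 2%N => c 0%N * G 2%N 2%N
  | 1%N, 1%N, 0%N => 2%:R * (c 1%N * G 0%N 1%N) - c 0%N * G 1%N 1%N
  | 1%N, 1%N, 1%N => c 1%N * G 1%N 1%N
  | 1%N, 1%N, 2%N => 2%:R * (c 1%N * G 1%N 2%N) - c 2%N * G 1%N 1%N
  | 1%N, 2%N, 0%N => c 1%N * G 0%N 2%N + c 2%N * G 0%N 1%N - c 0%N * G 1%N 2%N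
  | 1%N, 2%N, 1%N => c 2%N * G 1%N 1%N
  | 1%N, 2%N, 2%N => c 1%N * G 2%N 2%N
  | 2%N, 2%N, 0%N => 2%:R * (c 2%N * G 0%N 2%N) - c 0%N * G 2%N 2%N
  | 2%N, 2%N, 1%N => 2%:R * (c 2%N * G 1%N 2%N) - c 1%N * G 2%N 2%N
  | 2%N, 2%N, 2%N => c 2%N * G 2%N 2%N
  | _, _, _ => 0
  end.

Definition DeltaC (c : nat -> k) (G : nat -> nat -> k) : k :=
  c 0%N ^+ 2 * (G 1%N 1%N * G 2%N 2%N - G 1%N 2%N ^+ 2)
  + c 1%N ^+ 2 * (G 0%N 0%N * G 2%N 2%N - G 0%N 2%N ^+ 2)
  + c 2%N ^+ 2 * (G 0%N 0%N * G 1%N 1%N - G 0%N 1%N ^+ 2)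
  + 2%:R * c 0%N * c 1%N * (G 0%N 2%N * G 1%N 2%N - G 0%N 1%N * G 2%N 2%N)
  + 2%:R * c 0%N * c 2%N * (G 0%N 1%N * G 1%N 2%N - G 0%N 2%N * G 1%N 1%N)
  + 2%:R * c 1%N * c 2%N * (G 0%N 1%N * G 0%N 2%N - G 0%N 0%N * G 1%N 2%N).

Definition E3 (p : 'I_3 * 'I_3 * 'I_3) : T3 k :=
  [ffun t => dl t.1.1 p.1.1 * dl t.1.2 p.1.2 * dl t.2 p.2].

End M.


Lemma ord3_cases (P : 'I_3 -> Prop) : P i0 -> P i1 -> P i2 -> forall i, P i.
Proof.
move=> H0 H1 H2 [[|[|[|m]]] Hm] //.
- by rewrite (bool_irrelevance Hm isT).
- by rewrite (bool_irrelevance Hm isT).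
- by rewrite (bool_irrelevance Hm isT).
Qed.

Definition o3 (n : nat) : 'I_3 := match n with 0%N => i0 | 1%N => i1 | _ => i2 end.
Definition mu1 (m : nat) : 'I_3 := match m with 0%N => i1 | 1%N => i2 | _ => i0 end.
Definition mu2 (m : nat) : 'I_3 := match m with 0%N => i2 | 1%N => i0 | _ => i1 end.

Section M2.
Variable k : fieldType.
Definition ev (i : 'I_3) : V k := \row_(j < 3) dl k i j.
Definition E2 (i j : 'I_3) : T2 k := [ffun p => dl k p.1 i * dl k p.2 j].
Definition eps (i j l : 'I_3) : k :=
  match nat_of_ord i, nat_of_ord j, nat_of_ord l with
  | 0%N,1%N,2%N | 1%N,2%N,0%N | 2%N,0%N,1%N => 1
  | 2%N,1%N,0%N | 0%N,2%N,1%N | 1%N,0%N,2%N => -1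
  | _,_,_ => 0 end.
Definition dln (m : 'I_3) (m' : nat) : k :=
  match nat_of_ord m, m' with 0%N,0%N | 1%N,1%N | 2%N,2%N => 1 | _,_ => 0 end.
Definition Bas (x m : 'I_3) : T3 k := [ffun t => dl k t.1.1 x * lv (dln m) t.1.2 t.2].
End M2.

Section L.
Variable k : fieldType.
Implicit Types (s : nat -> nat -> nat -> k) (h : k).

Lemma dlE (c p : 'I_3) : dl k c p = if c == p then 1 else 0.
Proof.
case: c => [[|[|[|c]]] Hc] //; case: p => [[|[|[|p]]] Hp] //.
Qed.

Lemma sum_dl (F : 'I_3 -> k) p : \sum_(c < 3) dl k c p * F c = F p.
Proof.
rewrite (bigD1 p) //= big1 ?addr0; first by rewrite dlE eqxx mul1r.
by move=> c /negbTE; rewrite dlE => ->; rewrite mul0r.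
Qed.

Lemma IdY_Ymod s h w i j l :
  IdY (Ymod s h) w (i,j,l) = \sum_(a<3) \sum_(b<3) w (i,a,b) * Kmod s h a b j l.
Proof. rewrite !ffunE /=; apply: eq_bigr => a _; apply: eq_bigr => b _; by rewrite ffunE. Qed.

Lemma YId_Ymod s h w i j l :
  YId (Ymod s h) w (i,j,l) = \sum_(a<3) \sum_(b<3) w (a,b,l) * Kmod s h a b i j.
Proof. rewrite !ffunE /=; apply: eq_bigr => a _; apply: eq_bigr => b _; by rewrite ffunE. Qed.

End L.

Section L2.
Variable k : fieldType.
Implicit Types (s : nat -> nat -> nat -> k) (h : k).
Local Notation K := (Kmod _).

Lemma IdY_E3 s h p i j l :
  IdY (Ymod s h) (E3 k p) (i,j,l) = dl k i p.1.1 * Kmod s h p.1.2 p.2 j l.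
Proof.
rewrite IdY_Ymod.
transitivity (\sum_(a<3) dl k a p.1.2 * \sum_(b<3) dl k b p.2 * (dl k i p.1.1 * Kmod s h a b j l)).
  apply: eq_bigr => a _; rewrite mulr_sumr; apply: eq_bigr => b _ /=.
  rewrite ffunE /=; kring k.
under eq_bigr => a _ do rewrite sum_dl.
by rewrite sum_dl.
Qed.

Lemma YId_E3 s h p i j l :
  YId (Ymod s h) (E3 k p) (i,j,l) = dl k l p.2 * Kmod s h p.1.1 p.1.2 i j.
Proof.
rewrite YId_Ymod.
transitivity (\sum_(a<3) dl k a p.1.1 * \sum_(b<3) dl k b p.1.2 * (dl k l p.2 * Kmod s h a b i j)).
  apply: eq_bigr => a _; rewrite mulr_sumr; apply: eq_bigr => b _ /=.
  rewrite ffunE /=; kring k.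
under eq_bigr => a _ do rewrite sum_dl.
by rewrite sum_dl.
Qed.

Lemma braidL s h p i j l :
  IdY (Ymod s h) (YId (Ymod s h) (IdY (Ymod s h) (E3 k p))) (i,j,l) =
  \sum_(a<3) \sum_(b<3) \sum_(d<3)
     Kmod s h p.1.2 p.2 d b * Kmod s h p.1.1 d i a * Kmod s h a b j l.
Proof.
rewrite IdY_Ymod; apply: eq_bigr => a _; apply: eq_bigr => b _.
rewrite YId_Ymod mulr_suml /=.
transitivity (\sum_(c<3) dl k c p.1.1 * \sum_(d<3)
   (Kmod s h p.1.2 p.2 d b * Kmod s h c d i a * Kmod s h a b j l)).
  apply: eq_bigr => c _; rewrite mulr_suml mulr_sumr; apply: eq_bigr => d _ /=.
  rewrite IdY_E3; kring k.
by rewrite sum_dl.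
Qed.

Lemma braidR s h p i j l :
  YId (Ymod s h) (IdY (Ymod s h) (YId (Ymod s h) (E3 k p))) (i,j,l) =
  \sum_(a<3) \sum_(b<3) \sum_(c<3)
     Kmod s h p.1.1 p.1.2 a c * Kmod s h c p.2 b l * Kmod s h a b i j.
Proof.
rewrite YId_Ymod; apply: eq_bigr => a _; apply: eq_bigr => b _.
rewrite IdY_Ymod mulr_suml /=.
apply: eq_bigr => c _; rewrite mulr_suml /=.
transitivity (\sum_(d<3) dl k d p.2 * 
   (Kmod s h p.1.1 p.1.2 a c * Kmod s h c d b l * Kmod s h a b i j)).
  apply: eq_bigr => d _; rewrite YId_E3; kring k.
by rewrite sum_dl.
Qed.
End L2.
Lemma subZE (k : fieldType) (f g : T3 k) (c : k) x : (f - c *: g) x = f x - c * g x.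
Proof. by rewrite !ffunE. Qed.

Section A.
Variable k : fieldType.

Ltac enum3 i := elim/ord3_cases: i.

Lemma scaleffE (T : finType) (f : {ffun T -> k^o}) (c : k) x : (c *: f) x = c * f x.
Proof. by rewrite ffunE. Qed.

Lemma wedge3_eps (x y z : V k) i j l :
  wedge3 x y z (i,j,l) = eps k i j l * wedge3 x y z (i0,i1,i2).
Proof.
enum3 i; enum3 j; enum3 l; rewrite !ffunE /=; cbv [eps nat_of_ord]; kring k.
Qed.

Lemma Alt3E (t : T3 k) : Alt3 t -> forall i j l, t (i,j,l) = eps k i j l * t (i0,i1,i2).
Proof.
case=> n [c [x [y [z ->]]]] i j l; rewrite !sum_ffunE mulr_sumr.
apply: eq_bigr => p _; rewrite !scaleffE wedge3_eps; kring k.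
Qed.

Lemma Alt3I (t : T3 k) : (forall i j l, t (i,j,l) = eps k i j l * t (i0,i1,i2)) -> Alt3 t.
Proof.
move=> H; exists 1%N, (fun _ => t (i0,i1,i2)), (fun _ => ev k i0), (fun _ => ev k i1), (fun _ => ev k i2).
apply/ffunP => [[[i j] l]]; rewrite big_ord1 ffunE H mulrC; congr (_ * _).
enum3 i; enum3 j; enum3 l; rewrite !ffunE !mxE /=; cbv [eps dl nat_of_ord]; kring k.
Qed.

Lemma Alt2_anti (u : T2 k) : Alt2 u -> forall i j, u (i,j) = - u (j,i).
Proof.
case=> n [c [x [y ->]]] i j; rewrite !sum_ffunE -sumrN.
apply: eq_bigr => p _; rewrite !ffunE /=; kring k.
Qed.

Lemma Alt2_diag (u : T2 k) : Alt2 u -> forall i, u (i,i) = 0.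
Proof.
case=> n [c [x [y ->]]] i; rewrite !sum_ffunE big1 // => p _; rewrite !ffunE /=; kring k.
Qed.

Lemma VAlt2_anti (w : T3 k) : V_Alt2 w -> forall x i j, w (x,i,j) = - w (x,j,i).
Proof.
case=> n [x [u [Hu ->]]] y i j; rewrite !sum_ffunE -sumrN.
apply: eq_bigr => p _; rewrite !ffunE /= (Alt2_anti (Hu p)); kring k.
Qed.

Lemma VAlt2_diag (w : T3 k) : V_Alt2 w -> forall x i, w (x,i,i) = 0.
Proof.
case=> n [x [u [Hu ->]]] y i; rewrite !sum_ffunE big1 // => p _.
by rewrite !ffunE /= (Alt2_diag (Hu p)) mulr0.
Qed.

End A.

Section EQ.
Variable k : fieldType.
Implicit Types (s : nat -> nat -> nat -> k) (h : k).

Lemma lin_step (X L c : k) : L = 0 -> X - c * L = 0 -> X = 0.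
Proof. by move=> -> ; rewrite mulr0 subr0. Qed.

Lemma out_Ymod s h w i j l :
  IdY (Ymod s h) (YId (Ymod s h) w) (i,j,l) =
  \sum_(a<3) \sum_(b<3) (\sum_(c<3) \sum_(d<3) w (c,d,b) * Kmod s h c d i a) * Kmod s h a b j l.
Proof.
rewrite IdY_Ymod; apply: eq_bigr => a _; apply: eq_bigr => b _; by rewrite YId_Ymod.
Qed.

Lemma out2_Ymod s h w i j l :
  YId (Ymod s h) (IdY (Ymod s h) w) (i,j,l) =
  \sum_(a<3) \sum_(b<3) (\sum_(c<3) \sum_(d<3) w (a,c,d) * Kmod s h c d b l) * Kmod s h a b i j.
Proof.
rewrite YId_Ymod; apply: eq_bigr => a _; apply: eq_bigr => b _; by rewrite IdY_Ymod.
Qed.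
End EQ.
Section R1.
Variable k : fieldType.
Lemma rank1 (P : nat -> nat -> k) :
  (forall m m' j j', (m < m' < 3)%N -> (j < j' < 6)%N -> P m j * P m' j' = P m j' * P m' j) ->
  exists (c : nat -> k) (G : nat -> k), forall m j, (m < 3)%N -> (j < 6)%N -> P m j = c m * G j.
Proof.
move=> H.
have Hj : forall m m' j j', (m < m' < 3)%N -> (j < 6)%N -> (j' < 6)%N ->
    P m j * P m' j' = P m j' * P m' j.
  move=> m m' j j' Hm Hj Hj'.
  case: (ltngtP j j') => [lt|gt|->] //.
  - by apply: H => //; rewrite lt.
  - by rewrite (H m m' j' j) // gt.
have H' : forall m m' j j', (m < 3)%N -> (m' < 3)%N -> (j < 6)%N -> (j' < 6)%N ->
    P m j * P m' j' = P m j' * P m' j.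
  move=> m m' j j' Hm Hm' Hj1 Hj2.
  case: (ltngtP m m') => [lt|gt|->].
  - by apply: Hj => //; rewrite lt.
  - by rewrite [LHS]mulrC [RHS]mulrC (Hj m' m j' j) // gt.
  - by rewrite mulrC.
case: (boolP [exists m : 'I_3, exists j : 'I_6, P m j != 0]).
  case/existsP=> m0 /existsP [j0 Hnz].
  exists (fun m => P m j0), (fun j => P m0 j / P m0 j0) => m j Hm Hj1.
  by rewrite mulrA -(H' m m0 j j0) // mulfK.
move=> H0; exists (fun _ => 0), (fun _ => 0) => m j Hm Hj1.
rewrite mul0r; move/existsPn: H0 => /(_ (Ordinal Hm)) /existsPn /(_ (Ordinal Hj1)).
by rewrite negbK => /eqP.
Qed.
End R1.
Section B.
Variable k : fieldType.

Lemma sum2_dl (F : 'I_3 -> 'I_3 -> k) u v :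
  \sum_(i < 3) \sum_(j < 3) F i j * (dl k u i * dl k v j) = F u v.
Proof. elim/ord3_cases: u; elim/ord3_cases: v; rewrite !sum3; cbv [dl nat_of_ord]; kring k. Qed.

Lemma Ylin (Y : {linear T2 k -> T2 k}) w u v :
  Y w (u,v) = \sum_(i<3) \sum_(j<3) w (i,j) * Y (E2 k i j) (u,v).
Proof.
have wE : w = \sum_(i<3) \sum_(j<3) w (i,j) *: E2 k i j.
  apply/ffunP => [[a b]]; rewrite sum_ffunE.
  rewrite -[LHS](sum2_dl (fun i j => w (i,j))).
  apply: eq_bigr => i _; rewrite sum_ffunE; apply: eq_bigr => j _.
  by rewrite scaleffE ffunE.
rewrite {1}wE linear_sum sum_ffunE; apply: eq_bigr => i _.
rewrite linear_sum sum_ffunE; apply: eq_bigr => j _.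
by rewrite linearZ scaleffE.
Qed.

Definition cab (a b : V k) (m : nat) : k :=
  a ord0 (mu1 m) * b ord0 (mu2 m) - a ord0 (mu2 m) * b ord0 (mu1 m).
Definition Gs (G : nat -> nat -> k) (i j : 'I_3) : k :=
  match nat_of_ord i, nat_of_ord j with
  | 1%N,0%N => G 0%N 1%N | 2%N,0%N => G 0%N 2%N | 2%N,1%N => G 1%N 2%N | a,b => G a b end.

Lemma F1 (a b : V k) (g : V k -> V k -> k) G h
  (gexp : forall x y, g x y = \sum_(i<3) \sum_(j<3) x ord0 i * y ord0 j * Gs G i j) x y u v :
  (g x y *: wedge2 a b + wedge2 x (g b y *: a - g a y *: b) + wedge2 y (g b x *: a - g a x *: b)
     + h *: wedge2 x y) (u,v)
  = \sum_(i<3) \sum_(j<3) x ord0 i * y ord0 j * Kmod (sL (cab a b) G) h i j u v.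
Proof.
elim/ord3_cases: u; elim/ord3_cases: v; rewrite !ffunE !mxE !gexp !sum3;
  cbv [Kmod sv lv dl sL Gs cab mu1 mu2 nat_of_ord fst snd]; kring k.
Qed.
End B.
Section F.
Variable k : fieldType.
Hypothesis hchar : (2%:R : k) != 0.

Definition row3 (x y z : k) : V k :=
  \row_(j < 3) match nat_of_ord j with 0%N => x | 1%N => y | _ => z end.

Lemma ab_exists (c : nat -> k) :
  exists a b : V k, [/\ cab a b 0 = c 0%N, cab a b 1 = c 1%N & cab a b 2 = c 2%N].
Proof.
case: (eqVneq (c 0%N) 0) => H0.
  case: (eqVneq (c 1%N) 0) => H1.
    case: (eqVneq (c 2%N) 0) => H2.
      exists 0, 0; rewrite /cab !mxE H0 H1 H2; split; ring.
    exists (row3 1 0 (- c 0%N / c 2%N)), (row3 0 (c 2%N) (- c 1%N)).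
    rewrite /cab !mxE /=; split; field => //.
  exists (row3 0 (- c 2%N / c 1%N) 1), (row3 (c 1%N) (- c 0%N) 0).
  rewrite /cab !mxE /=; split; field => //.
exists (row3 (- c 1%N / c 0%N) 1 0), (row3 (- c 2%N) 0 (c 0%N)).
rewrite /cab !mxE /=; split; field => //.
Qed.
End F.
Section G.
Variable k : fieldType.
Hypothesis hchar : (2%:R : k) != 0.

Definition sY (Y : T2 k -> T2 k) (i j m : nat) : k :=
  (Y (E2 k (o3 i) (o3 j)) (mu1 m, mu2 m) + Y (E2 k (o3 j) (o3 i)) (mu1 m, mu2 m)) / 2%:R.

Lemma sv_sY Y i j m :
  sv (sY Y) i j m = (Y (E2 k i j) (mu1 m, mu2 m) + Y (E2 k j i) (mu1 m, mu2 m)) / 2%:R.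
Proof. elim/ord3_cases: i; elim/ord3_cases: j; cbv [sv sY o3 nat_of_ord]; kring k. Qed.

Lemma lv_ext (f f' : nat -> k) u v :
  f 0%N = f' 0%N -> f 1%N = f' 1%N -> f 2%N = f' 2%N -> lv f u v = lv f' u v.
Proof. by rewrite /lv => -> -> ->. Qed.

Lemma lv_anti (C : 'I_3 -> 'I_3 -> k) (c : k) (Ha : forall u v, C u v = - C v u)
  (Hd : forall u, C u u = 0) u v :
  lv (fun m => C (mu1 m) (mu2 m) * c) u v = C u v * c.
Proof.
elim/ord3_cases: u; elim/ord3_cases: v; cbv [lv mu1 mu2 nat_of_ord];
 rewrite ?(Hd i0) ?(Hd i1) ?(Hd i2) ?(Ha i2 i1) ?(Ha i0 i2) ?(Ha i1 i0); kring k.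
Qed.

Lemma dlC i j : dl k i j = dl k j i.
Proof. by rewrite !dlE eq_sym. Qed.

Lemma Ahelper (A B X q : k) : A - B = (q + 1) * X -> A = (A + B) * 2%:R^-1 + (q + 1) / 2%:R * X.
Proof.
move=> HAB; rewrite mulrAC -HAB; field; exact: hchar.
Qed.

Lemma E2_wedge i j : E2 k i j - E2 k j i = wedge2 (ev k i) (ev k j).
Proof. apply/ffunP => [[u v]]; rewrite !ffunE !mxE /= (dlC u) (dlC v) (dlC u j) (dlC v i). kring k. Qed.

Lemma Ymodel_fwd (Y : {linear T2 k -> T2 k}) (q : k)
  (himY : forall w, Alt2 (Y w))
  (condA : forall w, Alt2 w -> Y w = (q + 1) *: w) :
  forall w, Y w = Ymod (sY Y) ((q + 1) / 2%:R) w.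
Proof.
have key : forall i j u v, Y (E2 k i j) (u,v) = Kmod (sY Y) ((q + 1) / 2%:R) i j u v.
  move=> i j u v; rewrite /Kmod.
  pose C := fun a b => (Y (E2 k i j) (a,b) : k) + Y (E2 k j i) (a,b).
  rewrite (@lv_ext _ (fun m => C (mu1 m) (mu2 m) * 2%:R^-1)); last first.
  - by rewrite sv_sY.
  - by rewrite sv_sY.
  - by rewrite sv_sY.
  rewrite lv_anti; last first.
  - by move=> w; rewrite /C (Alt2_diag (himY _)) (Alt2_diag (himY _)) addr0.
  - by move=> a b; rewrite /C (Alt2_anti (himY (E2 k i j))) (Alt2_anti (himY (E2 k j i))) opprD.
  rewrite /C; apply: Ahelper.
  have HA : Alt2 (E2 k i j - E2 k j i).
    exists 1%N, (fun _ => 1), (fun _ => ev k i), (fun _ => ev k j).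
    by rewrite big_ord1 scale1r E2_wedge.
  have := congr1 (fun f : T2 k => f (u,v)) (condA _ HA).
  rewrite linearB /= !ffunE /= => ->.
  rewrite (dlC u) (dlC v) (dlC u j) (dlC v i); kring k.
move=> w; apply/ffunP => [[u v]]; rewrite Ylin ffunE /=.
apply: eq_bigr => i _; apply: eq_bigr => j _; by rewrite key.
Qed.
End G.

Section S3.
Variable k : fieldType.
Implicit Types (s : nat -> nat -> nat -> k) (h : k).
Definition S3 (F : 'I_3 -> k) : k := F i0 + F i1 + F i2.
Lemma sumS3 (F : 'I_3 -> k) : \sum_(i < 3) F i = S3 F.
Proof. exact: sum3. Qed.
Lemma S3_ext (F F' : 'I_3 -> k) : (forall i, F i = F' i) -> S3 F = S3 F'.
Proof. by move=> H; rewrite /S3 !H. Qed.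

Lemma outS3 s h (w : T3 k) (W : 'I_3 -> 'I_3 -> 'I_3 -> k) (HW : forall c d b, w (c,d,b) = W c d b) i j l :
  IdY (Ymod s h) (YId (Ymod s h) w) (i,j,l) =
  S3 (fun a => S3 (fun b => S3 (fun c => S3 (fun d => W c d b * Kmod s h c d i a)) * Kmod s h a b j l)).
Proof.
rewrite out_Ymod sumS3; apply: S3_ext => a; rewrite sumS3; apply: S3_ext => b.
rewrite sumS3; congr (_ * _); apply: S3_ext => c; rewrite sumS3; apply: S3_ext => d.
by rewrite HW.
Qed.

Lemma out2S3 s h (w : T3 k) (W : 'I_3 -> 'I_3 -> 'I_3 -> k) (HW : forall c d b, w (c,d,b) = W c d b) i j l :
  YId (Ymod s h) (IdY (Ymod s h) w) (i,j,l) =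
  S3 (fun a => S3 (fun b => S3 (fun c => S3 (fun d => W a c d * Kmod s h c d b l)) * Kmod s h a b i j)).
Proof.
rewrite out2_Ymod sumS3; apply: S3_ext => a; rewrite sumS3; apply: S3_ext => b.
rewrite sumS3; congr (_ * _); apply: S3_ext => c; rewrite sumS3; apply: S3_ext => d.
by rewrite HW.
Qed.

Lemma braidLS3 s h p i j l :
  IdY (Ymod s h) (YId (Ymod s h) (IdY (Ymod s h) (E3 k p))) (i,j,l) =
  S3 (fun a => S3 (fun b => S3 (fun d =>
     Kmod s h p.1.2 p.2 d b * Kmod s h p.1.1 d i a * Kmod s h a b j l))).
Proof.
rewrite braidL sumS3; apply: S3_ext => a; rewrite sumS3; apply: S3_ext => b.
by rewrite sumS3.
Qed.

Lemma braidRS3 s h p i j l :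
  YId (Ymod s h) (IdY (Ymod s h) (YId (Ymod s h) (E3 k p))) (i,j,l) =
  S3 (fun a => S3 (fun b => S3 (fun c =>
     Kmod s h p.1.1 p.1.2 a c * Kmod s h c p.2 b l * Kmod s h a b i j))).
Proof.
rewrite braidR sumS3; apply: S3_ext => a; rewrite sumS3; apply: S3_ext => b.
by rewrite sumS3.
Qed.

Lemma lv_anti1 (C : 'I_3 -> 'I_3 -> k) (Ha : forall u v, C u v = - C v u)
  (Hd : forall u, C u u = 0) u v :
  lv (fun m => C (mu1 m) (mu2 m)) u v = C u v.
Proof.
elim/ord3_cases: u; elim/ord3_cases: v; cbv [lv mu1 mu2 nat_of_ord];
 rewrite ?(Hd i0) ?(Hd i1) ?(Hd i2) ?(Ha i2 i1) ?(Ha i0 i2) ?(Ha i1 i0) //; kring k.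
Qed.
End S3.
Ltac tok k H := move: H; match goal with |- @eq _ ?a ?b -> ?G => change (@eq (GRing.Field.sort k) a b -> G) end; intro H.
Section EQS.
Variable k : fieldType.
Implicit Types (s : nat -> nat -> nat -> k) (h : k).
Definition Pn (s : nat -> nat -> nat -> k) (m j : nat) : k :=
  match m, j with
  | 0%N, 0%N => 2%:R * s 0%N 0%N 0%N
  | 0%N, 1%N => s 0%N 0%N 1%N + s 0%N 1%N 0%N
  | 0%N, 2%N => s 0%N 0%N 2%N + s 0%N 2%N 0%N
  | 0%N, 3%N => 2%:R * s 0%N 1%N 1%N
  | 0%N, 4%N => s 0%N 1%N 2%N + s 0%N 2%N 1%N
  | 0%N, 5%N => 2%:R * s 0%N 2%N 2%N
  | 1%N, 0%N => 2%:R * s 0%N 1%N 0%N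
  | 1%N, 1%N => s 0%N 1%N 1%N + s 1%N 1%N 0%N
  | 1%N, 2%N => s 0%N 1%N 2%N + s 1%N 2%N 0%N
  | 1%N, 3%N => 2%:R * s 1%N 1%N 1%N
  | 1%N, 4%N => s 1%N 1%N 2%N + s 1%N 2%N 1%N
  | 1%N, 5%N => 2%:R * s 1%N 2%N 2%N
  | 2%N, 0%N => 2%:R * s 0%N 2%N 0%N
  | 2%N, 1%N => s 0%N 2%N 1%N + s 1%N 2%N 0%N
  | 2%N, 2%N => s 0%N 2%N 2%N + s 2%N 2%N 0%N
  | 2%N, 3%N => 2%:R * s 1%N 2%N 1%N
  | 2%N, 4%N => s 1%N 2%N 2%N + s 2%N 2%N 1%N
  | 2%N, 5%N => 2%:R * s 2%N 2%N 2%N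
  | _, _ => 0 end.
Definition DeltaPn (s : nat -> nat -> nat -> k) : k :=
  (Pn s 0%N 3%N * Pn s 0%N 5%N - Pn s 0%N 4%N * Pn s 0%N 4%N)
  + (Pn s 1%N 0%N * Pn s 1%N 5%N - Pn s 1%N 2%N * Pn s 1%N 2%N)
  + (Pn s 2%N 0%N * Pn s 2%N 3%N - Pn s 2%N 1%N * Pn s 2%N 1%N)
  + 2%:R * (Pn s 0%N 2%N * Pn s 1%N 4%N - Pn s 0%N 1%N * Pn s 1%N 5%N)
  + 2%:R * (Pn s 0%N 1%N * Pn s 2%N 4%N - Pn s 0%N 2%N * Pn s 2%N 3%N)
  + 2%:R * (Pn s 1%N 1%N * Pn s 2%N 2%N - Pn s 1%N 0%N * Pn s 2%N 4%N).

Lemma rawR00001 s h q :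
  Alt3 (IdY (Ymod s h) (YId (Ymod s h) (Bas k i0 i0)) - q *: Bas k i0 i0) ->
  0 - s 0%N 1%N 1%N * s 2%N 2%N 2%N + s 0%N 1%N 2%N * s 1%N 2%N 2%N + s 0%N 2%N 1%N * s 1%N 2%N 2%N - s 0%N 2%N 2%N * s 1%N 1%N 2%N = 0.
Proof.
move=> H; have HB : forall x m c d b, Bas k x m (c,d,b) = dl k c x * lv (dln k m) d b by move=> *; rewrite ffunE.
have E := Alt3E H i0 i0 i1.
rewrite !subZE !(outS3 _ _ (HB i0 i0)) !HB in E; cbv [S3 Kmod sv lv dl dln eps mu1 mu2 nat_of_ord fst snd] in E.
move/eqP: E; rewrite -subr_eq0 => /eqP E; tok k E.
apply: (@lin_step _ _ _ 1 E); kring k.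
Qed.

Lemma rawR00002 s h q :
  Alt3 (IdY (Ymod s h) (YId (Ymod s h) (Bas k i0 i0)) - q *: Bas k i0 i0) ->
  s 0%N 1%N 1%N * s 2%N 2%N 1%N - s 0%N 1%N 2%N * s 1%N 2%N 1%N - s 0%N 2%N 1%N * s 1%N 2%N 1%N + s 0%N 2%N 2%N * s 1%N 1%N 1%N = 0.
Proof.
move=> H; have HB : forall x m c d b, Bas k x m (c,d,b) = dl k c x * lv (dln k m) d b by move=> *; rewrite ffunE.
have E := Alt3E H i0 i0 i2.
rewrite !subZE !(outS3 _ _ (HB i0 i0)) !HB in E; cbv [S3 Kmod sv lv dl dln eps mu1 mu2 nat_of_ord fst snd] in E.
move/eqP: E; rewrite -subr_eq0 => /eqP E; tok k E.
apply: (@lin_step _ _ _ 1 E); kring k.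
Qed.

Lemma rawR00101 s h q :
  Alt3 (IdY (Ymod s h) (YId (Ymod s h) (Bas k i0 i0)) - q *: Bas k i0 i0) ->
  s 0%N 1%N 0%N * s 2%N 2%N 2%N - s 0%N 2%N 0%N * s 1%N 2%N 2%N = 0.
Proof.
move=> H; have HB : forall x m c d b, Bas k x m (c,d,b) = dl k c x * lv (dln k m) d b by move=> *; rewrite ffunE.
have E := Alt3E H i1 i0 i1.
rewrite !subZE !(outS3 _ _ (HB i0 i0)) !HB in E; cbv [S3 Kmod sv lv dl dln eps mu1 mu2 nat_of_ord fst snd] in E.
move/eqP: E; rewrite -subr_eq0 => /eqP E; tok k E.
apply: (@lin_step _ _ _ 1 E); kring k.
Qed.

Lemma rawR00102 s h q :
  Alt3 (IdY (Ymod s h) (YId (Ymod s h) (Bas k i0 i0)) - q *: Bas k i0 i0) ->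
  h ^+ 2 - q - s 0%N 1%N 0%N * s 2%N 2%N 1%N - s 0%N 1%N 1%N * s 0%N 2%N 2%N - s 0%N 1%N 1%N * s 2%N 2%N 0%N + s 0%N 1%N 2%N * s 0%N 2%N 1%N + s 0%N 1%N 2%N * s 1%N 2%N 0%N + s 0%N 2%N 0%N * s 1%N 2%N 1%N + s 0%N 2%N 1%N * s 1%N 2%N 0%N - s 0%N 2%N 2%N * s 1%N 1%N 0%N = 0.
Proof.
move=> H; have HB : forall x m c d b, Bas k x m (c,d,b) = dl k c x * lv (dln k m) d b by move=> *; rewrite ffunE.
have E := Alt3E H i1 i0 i2.
rewrite !subZE !(outS3 _ _ (HB i0 i0)) !HB in E; cbv [S3 Kmod sv lv dl dln eps mu1 mu2 nat_of_ord fst snd] in E.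
move/eqP: E; rewrite -subr_eq0 => /eqP E; tok k E.
apply: (@lin_step _ _ _ 1 E); kring k.
Qed.

Lemma rawR00112 s h q :
  Alt3 (IdY (Ymod s h) (YId (Ymod s h) (Bas k i0 i0)) - q *: Bas k i0 i0) ->
  s 0%N 1%N 0%N * s 0%N 2%N 2%N + s 0%N 1%N 0%N * s 2%N 2%N 0%N - s 0%N 1%N 2%N * s 0%N 2%N 0%N - s 0%N 2%N 0%N * s 1%N 2%N 0%N = 0.
Proof.
move=> H; have HB : forall x m c d b, Bas k x m (c,d,b) = dl k c x * lv (dln k m) d b by move=> *; rewrite ffunE.
have E := Alt3E H i1 i1 i2.
rewrite !subZE !(outS3 _ _ (HB i0 i0)) !HB in E; cbv [S3 Kmod sv lv dl dln eps mu1 mu2 nat_of_ord fst snd] in E.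
move/eqP: E; rewrite -subr_eq0 => /eqP E; tok k E.
apply: (@lin_step _ _ _ 1 E); kring k.
Qed.

Lemma rawR00202 s h q :
  Alt3 (IdY (Ymod s h) (YId (Ymod s h) (Bas k i0 i0)) - q *: Bas k i0 i0) ->
  s 0%N 1%N 0%N * s 1%N 2%N 1%N - s 0%N 2%N 0%N * s 1%N 1%N 1%N = 0.
Proof.
move=> H; have HB : forall x m c d b, Bas k x m (c,d,b) = dl k c x * lv (dln k m) d b by move=> *; rewrite ffunE.
have E := Alt3E H i2 i0 i2.
rewrite !subZE !(outS3 _ _ (HB i0 i0)) !HB in E; cbv [S3 Kmod sv lv dl dln eps mu1 mu2 nat_of_ord fst snd] in E.
move/eqP: E; rewrite -subr_eq0 => /eqP E; tok k E.
apply: (@lin_step _ _ _ 1 E); kring k.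
Qed.

Lemma rawR00212 s h q :
  Alt3 (IdY (Ymod s h) (YId (Ymod s h) (Bas k i0 i0)) - q *: Bas k i0 i0) ->
  0 - s 0%N 1%N 0%N * s 0%N 2%N 1%N - s 0%N 1%N 0%N * s 1%N 2%N 0%N + s 0%N 1%N 1%N * s 0%N 2%N 0%N + s 0%N 2%N 0%N * s 1%N 1%N 0%N = 0.
Proof.
move=> H; have HB : forall x m c d b, Bas k x m (c,d,b) = dl k c x * lv (dln k m) d b by move=> *; rewrite ffunE.
have E := Alt3E H i2 i1 i2.
rewrite !subZE !(outS3 _ _ (HB i0 i0)) !HB in E; cbv [S3 Kmod sv lv dl dln eps mu1 mu2 nat_of_ord fst snd] in E.
move/eqP: E; rewrite -subr_eq0 => /eqP E; tok k E.
apply: (@lin_step _ _ _ 1 E); kring k.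
Qed.

Lemma rawR01001 s h q :
  Alt3 (IdY (Ymod s h) (YId (Ymod s h) (Bas k i0 i1)) - q *: Bas k i0 i1) ->
  s 0%N 0%N 1%N * s 2%N 2%N 2%N - s 0%N 0%N 2%N * s 1%N 2%N 2%N + s 0%N 1%N 2%N * s 0%N 2%N 2%N - s 0%N 2%N 1%N * s 0%N 2%N 2%N = 0.
Proof.
move=> H; have HB : forall x m c d b, Bas k x m (c,d,b) = dl k c x * lv (dln k m) d b by move=> *; rewrite ffunE.
have E := Alt3E H i0 i0 i1.
rewrite !subZE !(outS3 _ _ (HB i0 i1)) !HB in E; cbv [S3 Kmod sv lv dl dln eps mu1 mu2 nat_of_ord fst snd] in E.
move/eqP: E; rewrite -subr_eq0 => /eqP E; tok k E.
apply: (@lin_step _ _ _ 1 E); kring k.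
Qed.

Lemma rawR01002 s h q :
  Alt3 (IdY (Ymod s h) (YId (Ymod s h) (Bas k i0 i1)) - q *: Bas k i0 i1) ->
  0 - h ^+ 2 + q - s 0%N 0%N 1%N * s 2%N 2%N 1%N + s 0%N 0%N 2%N * s 1%N 2%N 1%N - s 0%N 1%N 1%N * s 0%N 2%N 2%N + s 0%N 2%N 1%N ^+ 2 = 0.
Proof.
move=> H; have HB : forall x m c d b, Bas k x m (c,d,b) = dl k c x * lv (dln k m) d b by move=> *; rewrite ffunE.
have E := Alt3E H i0 i0 i2.
rewrite !subZE !(outS3 _ _ (HB i0 i1)) !HB in E; cbv [S3 Kmod sv lv dl dln eps mu1 mu2 nat_of_ord fst snd] in E.
move/eqP: E; rewrite -subr_eq0 => /eqP E; tok k E.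
apply: (@lin_step _ _ _ 1 E); kring k.
Qed.

Lemma rawR01101 s h q :
  Alt3 (IdY (Ymod s h) (YId (Ymod s h) (Bas k i0 i1)) - q *: Bas k i0 i1) ->
  0 - s 0%N 0%N 0%N * s 2%N 2%N 2%N + s 0%N 2%N 0%N * s 0%N 2%N 2%N = 0.
Proof.
move=> H; have HB : forall x m c d b, Bas k x m (c,d,b) = dl k c x * lv (dln k m) d b by move=> *; rewrite ffunE.
have E := Alt3E H i1 i0 i1.
rewrite !subZE !(outS3 _ _ (HB i0 i1)) !HB in E; cbv [S3 Kmod sv lv dl dln eps mu1 mu2 nat_of_ord fst snd] in E.
move/eqP: E; rewrite -subr_eq0 => /eqP E; tok k E.
apply: (@lin_step _ _ _ 1 E); kring k.
Qed.

Lemma rawR01102 s h q :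
  Alt3 (IdY (Ymod s h) (YId (Ymod s h) (Bas k i0 i1)) - q *: Bas k i0 i1) ->
  s 0%N 0%N 0%N * s 2%N 2%N 1%N + s 0%N 0%N 1%N * s 0%N 2%N 2%N + s 0%N 0%N 1%N * s 2%N 2%N 0%N - s 0%N 0%N 2%N * s 0%N 2%N 1%N - s 0%N 0%N 2%N * s 1%N 2%N 0%N + s 0%N 1%N 0%N * s 0%N 2%N 2%N - 2%:R * s 0%N 2%N 0%N * s 0%N 2%N 1%N = 0.
Proof.
move=> H; have HB : forall x m c d b, Bas k x m (c,d,b) = dl k c x * lv (dln k m) d b by move=> *; rewrite ffunE.
have E := Alt3E H i1 i0 i2.
rewrite !subZE !(outS3 _ _ (HB i0 i1)) !HB in E; cbv [S3 Kmod sv lv dl dln eps mu1 mu2 nat_of_ord fst snd] in E.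
move/eqP: E; rewrite -subr_eq0 => /eqP E; tok k E.
apply: (@lin_step _ _ _ 1 E); kring k.
Qed.

Lemma rawR01112 s h q :
  Alt3 (IdY (Ymod s h) (YId (Ymod s h) (Bas k i0 i1)) - q *: Bas k i0 i1) ->
  0 - s 0%N 0%N 0%N * s 0%N 2%N 2%N - s 0%N 0%N 0%N * s 2%N 2%N 0%N + s 0%N 0%N 2%N * s 0%N 2%N 0%N + s 0%N 2%N 0%N ^+ 2 = 0.
Proof.
move=> H; have HB : forall x m c d b, Bas k x m (c,d,b) = dl k c x * lv (dln k m) d b by move=> *; rewrite ffunE.
have E := Alt3E H i1 i1 i2.
rewrite !subZE !(outS3 _ _ (HB i0 i1)) !HB in E; cbv [S3 Kmod sv lv dl dln eps mu1 mu2 nat_of_ord fst snd] in E.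
move/eqP: E; rewrite -subr_eq0 => /eqP E; tok k E.
apply: (@lin_step _ _ _ 1 E); kring k.
Qed.

Lemma rawR01202 s h q :
  Alt3 (IdY (Ymod s h) (YId (Ymod s h) (Bas k i0 i1)) - q *: Bas k i0 i1) ->
  0 - s 0%N 0%N 0%N * s 1%N 2%N 1%N + s 0%N 1%N 1%N * s 0%N 2%N 0%N = 0.
Proof.
move=> H; have HB : forall x m c d b, Bas k x m (c,d,b) = dl k c x * lv (dln k m) d b by move=> *; rewrite ffunE.
have E := Alt3E H i2 i0 i2.
rewrite !subZE !(outS3 _ _ (HB i0 i1)) !HB in E; cbv [S3 Kmod sv lv dl dln eps mu1 mu2 nat_of_ord fst snd] in E.
move/eqP: E; rewrite -subr_eq0 => /eqP E; tok k E.
apply: (@lin_step _ _ _ 1 E); kring k.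
Qed.

Lemma rawR01212 s h q :
  Alt3 (IdY (Ymod s h) (YId (Ymod s h) (Bas k i0 i1)) - q *: Bas k i0 i1) ->
  s 0%N 0%N 0%N * s 0%N 2%N 1%N + s 0%N 0%N 0%N * s 1%N 2%N 0%N - s 0%N 0%N 1%N * s 0%N 2%N 0%N - s 0%N 1%N 0%N * s 0%N 2%N 0%N = 0.
Proof.
move=> H; have HB : forall x m c d b, Bas k x m (c,d,b) = dl k c x * lv (dln k m) d b by move=> *; rewrite ffunE.
have E := Alt3E H i2 i1 i2.
rewrite !subZE !(outS3 _ _ (HB i0 i1)) !HB in E; cbv [S3 Kmod sv lv dl dln eps mu1 mu2 nat_of_ord fst snd] in E.
move/eqP: E; rewrite -subr_eq0 => /eqP E; tok k E.
apply: (@lin_step _ _ _ 1 E); kring k.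
Qed.

Lemma rawR02001 s h q :
  Alt3 (IdY (Ymod s h) (YId (Ymod s h) (Bas k i0 i2)) - q *: Bas k i0 i2) ->
  h ^+ 2 - q - s 0%N 0%N 1%N * s 1%N 2%N 2%N + s 0%N 0%N 2%N * s 1%N 1%N 2%N + s 0%N 1%N 1%N * s 0%N 2%N 2%N - s 0%N 1%N 2%N ^+ 2 = 0.
Proof.
move=> H; have HB : forall x m c d b, Bas k x m (c,d,b) = dl k c x * lv (dln k m) d b by move=> *; rewrite ffunE.
have E := Alt3E H i0 i0 i1.
rewrite !subZE !(outS3 _ _ (HB i0 i2)) !HB in E; cbv [S3 Kmod sv lv dl dln eps mu1 mu2 nat_of_ord fst snd] in E.
move/eqP: E; rewrite -subr_eq0 => /eqP E; tok k E.
apply: (@lin_step _ _ _ 1 E); kring k.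
Qed.

Lemma rawR02002 s h q :
  Alt3 (IdY (Ymod s h) (YId (Ymod s h) (Bas k i0 i2)) - q *: Bas k i0 i2) ->
  s 0%N 0%N 1%N * s 1%N 2%N 1%N - s 0%N 0%N 2%N * s 1%N 1%N 1%N + s 0%N 1%N 1%N * s 0%N 1%N 2%N - s 0%N 1%N 1%N * s 0%N 2%N 1%N = 0.
Proof.
move=> H; have HB : forall x m c d b, Bas k x m (c,d,b) = dl k c x * lv (dln k m) d b by move=> *; rewrite ffunE.
have E := Alt3E H i0 i0 i2.
rewrite !subZE !(outS3 _ _ (HB i0 i2)) !HB in E; cbv [S3 Kmod sv lv dl dln eps mu1 mu2 nat_of_ord fst snd] in E.
move/eqP: E; rewrite -subr_eq0 => /eqP E; tok k E.
apply: (@lin_step _ _ _ 1 E); kring k.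
Qed.

Lemma rawR02101 s h q :
  Alt3 (IdY (Ymod s h) (YId (Ymod s h) (Bas k i0 i2)) - q *: Bas k i0 i2) ->
  s 0%N 0%N 0%N * s 1%N 2%N 2%N - s 0%N 1%N 0%N * s 0%N 2%N 2%N = 0.
Proof.
move=> H; have HB : forall x m c d b, Bas k x m (c,d,b) = dl k c x * lv (dln k m) d b by move=> *; rewrite ffunE.
have E := Alt3E H i1 i0 i1.
rewrite !subZE !(outS3 _ _ (HB i0 i2)) !HB in E; cbv [S3 Kmod sv lv dl dln eps mu1 mu2 nat_of_ord fst snd] in E.
move/eqP: E; rewrite -subr_eq0 => /eqP E; tok k E.
apply: (@lin_step _ _ _ 1 E); kring k.
Qed.

Lemma rawR02112 s h q :
  Alt3 (IdY (Ymod s h) (YId (Ymod s h) (Bas k i0 i2)) - q *: Bas k i0 i2) ->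
  s 0%N 0%N 0%N * s 0%N 1%N 2%N + s 0%N 0%N 0%N * s 1%N 2%N 0%N - s 0%N 0%N 2%N * s 0%N 1%N 0%N - s 0%N 1%N 0%N * s 0%N 2%N 0%N = 0.
Proof.
move=> H; have HB : forall x m c d b, Bas k x m (c,d,b) = dl k c x * lv (dln k m) d b by move=> *; rewrite ffunE.
have E := Alt3E H i1 i1 i2.
rewrite !subZE !(outS3 _ _ (HB i0 i2)) !HB in E; cbv [S3 Kmod sv lv dl dln eps mu1 mu2 nat_of_ord fst snd] in E.
move/eqP: E; rewrite -subr_eq0 => /eqP E; tok k E.
apply: (@lin_step _ _ _ 1 E); kring k.
Qed.

Lemma rawR02201 s h q :
  Alt3 (IdY (Ymod s h) (YId (Ymod s h) (Bas k i0 i2)) - q *: Bas k i0 i2) ->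
  0 - s 0%N 0%N 0%N * s 1%N 1%N 2%N + s 0%N 0%N 1%N * s 0%N 1%N 2%N + s 0%N 0%N 1%N * s 1%N 2%N 0%N - s 0%N 0%N 2%N * s 0%N 1%N 1%N - s 0%N 0%N 2%N * s 1%N 1%N 0%N + 2%:R * s 0%N 1%N 0%N * s 0%N 1%N 2%N - s 0%N 1%N 1%N * s 0%N 2%N 0%N = 0.
Proof.
move=> H; have HB : forall x m c d b, Bas k x m (c,d,b) = dl k c x * lv (dln k m) d b by move=> *; rewrite ffunE.
have E := Alt3E H i2 i0 i1.
rewrite !subZE !(outS3 _ _ (HB i0 i2)) !HB in E; cbv [S3 Kmod sv lv dl dln eps mu1 mu2 nat_of_ord fst snd] in E.
move/eqP: E; rewrite -subr_eq0 => /eqP E; tok k E.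
apply: (@lin_step _ _ _ 1 E); kring k.
Qed.

Lemma rawR02202 s h q :
  Alt3 (IdY (Ymod s h) (YId (Ymod s h) (Bas k i0 i2)) - q *: Bas k i0 i2) ->
  s 0%N 0%N 0%N * s 1%N 1%N 1%N - s 0%N 1%N 0%N * s 0%N 1%N 1%N = 0.
Proof.
move=> H; have HB : forall x m c d b, Bas k x m (c,d,b) = dl k c x * lv (dln k m) d b by move=> *; rewrite ffunE.
have E := Alt3E H i2 i0 i2.
rewrite !subZE !(outS3 _ _ (HB i0 i2)) !HB in E; cbv [S3 Kmod sv lv dl dln eps mu1 mu2 nat_of_ord fst snd] in E.
move/eqP: E; rewrite -subr_eq0 => /eqP E; tok k E.
apply: (@lin_step _ _ _ 1 E); kring k.
Qed.

Lemma rawR02212 s h q :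
  Alt3 (IdY (Ymod s h) (YId (Ymod s h) (Bas k i0 i2)) - q *: Bas k i0 i2) ->
  0 - s 0%N 0%N 0%N * s 0%N 1%N 1%N - s 0%N 0%N 0%N * s 1%N 1%N 0%N + s 0%N 0%N 1%N * s 0%N 1%N 0%N + s 0%N 1%N 0%N ^+ 2 = 0.
Proof.
move=> H; have HB : forall x m c d b, Bas k x m (c,d,b) = dl k c x * lv (dln k m) d b by move=> *; rewrite ffunE.
have E := Alt3E H i2 i1 i2.
rewrite !subZE !(outS3 _ _ (HB i0 i2)) !HB in E; cbv [S3 Kmod sv lv dl dln eps mu1 mu2 nat_of_ord fst snd] in E.
move/eqP: E; rewrite -subr_eq0 => /eqP E; tok k E.
apply: (@lin_step _ _ _ 1 E); kring k.
Qed.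

Lemma rawR10001 s h q :
  Alt3 (IdY (Ymod s h) (YId (Ymod s h) (Bas k i1 i0)) - q *: Bas k i1 i0) ->
  0 - s 1%N 1%N 1%N * s 2%N 2%N 2%N + s 1%N 2%N 1%N * s 1%N 2%N 2%N = 0.
Proof.
move=> H; have HB : forall x m c d b, Bas k x m (c,d,b) = dl k c x * lv (dln k m) d b by move=> *; rewrite ffunE.
have E := Alt3E H i0 i0 i1.
rewrite !subZE !(outS3 _ _ (HB i1 i0)) !HB in E; cbv [S3 Kmod sv lv dl dln eps mu1 mu2 nat_of_ord fst snd] in E.
move/eqP: E; rewrite -subr_eq0 => /eqP E; tok k E.
apply: (@lin_step _ _ _ 1 E); kring k.
Qed.

Lemma rawR10002 s h q :
  Alt3 (IdY (Ymod s h) (YId (Ymod s h) (Bas k i1 i0)) - q *: Bas k i1 i0) ->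
  s 1%N 1%N 1%N * s 1%N 2%N 2%N + s 1%N 1%N 1%N * s 2%N 2%N 1%N - s 1%N 1%N 2%N * s 1%N 2%N 1%N - s 1%N 2%N 1%N ^+ 2 = 0.
Proof.
move=> H; have HB : forall x m c d b, Bas k x m (c,d,b) = dl k c x * lv (dln k m) d b by move=> *; rewrite ffunE.
have E := Alt3E H i0 i0 i2.
rewrite !subZE !(outS3 _ _ (HB i1 i0)) !HB in E; cbv [S3 Kmod sv lv dl dln eps mu1 mu2 nat_of_ord fst snd] in E.
move/eqP: E; rewrite -subr_eq0 => /eqP E; tok k E.
apply: (@lin_step _ _ _ 1 E); kring k.
Qed.

Lemma rawR10101 s h q :
  Alt3 (IdY (Ymod s h) (YId (Ymod s h) (Bas k i1 i0)) - q *: Bas k i1 i0) ->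
  s 0%N 1%N 2%N * s 1%N 2%N 2%N - s 0%N 2%N 2%N * s 1%N 1%N 2%N + s 1%N 1%N 0%N * s 2%N 2%N 2%N - s 1%N 2%N 0%N * s 1%N 2%N 2%N = 0.
Proof.
move=> H; have HB : forall x m c d b, Bas k x m (c,d,b) = dl k c x * lv (dln k m) d b by move=> *; rewrite ffunE.
have E := Alt3E H i1 i0 i1.
rewrite !subZE !(outS3 _ _ (HB i1 i0)) !HB in E; cbv [S3 Kmod sv lv dl dln eps mu1 mu2 nat_of_ord fst snd] in E.
move/eqP: E; rewrite -subr_eq0 => /eqP E; tok k E.
apply: (@lin_step _ _ _ 1 E); kring k.
Qed.

Lemma rawR10102 s h q :
  Alt3 (IdY (Ymod s h) (YId (Ymod s h) (Bas k i1 i0)) - q *: Bas k i1 i0) ->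
  0 - s 0%N 1%N 1%N * s 1%N 2%N 2%N + s 0%N 2%N 1%N * s 1%N 1%N 2%N - s 1%N 1%N 0%N * s 1%N 2%N 2%N - s 1%N 1%N 0%N * s 2%N 2%N 1%N - s 1%N 1%N 1%N * s 2%N 2%N 0%N + s 1%N 1%N 2%N * s 1%N 2%N 0%N + 2%:R * s 1%N 2%N 0%N * s 1%N 2%N 1%N = 0.
Proof.
move=> H; have HB : forall x m c d b, Bas k x m (c,d,b) = dl k c x * lv (dln k m) d b by move=> *; rewrite ffunE.
have E := Alt3E H i1 i0 i2.
rewrite !subZE !(outS3 _ _ (HB i1 i0)) !HB in E; cbv [S3 Kmod sv lv dl dln eps mu1 mu2 nat_of_ord fst snd] in E.
move/eqP: E; rewrite -subr_eq0 => /eqP E; tok k E.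
apply: (@lin_step _ _ _ 1 E); kring k.
Qed.

Lemma rawR10112 s h q :
  Alt3 (IdY (Ymod s h) (YId (Ymod s h) (Bas k i1 i0)) - q *: Bas k i1 i0) ->
  h ^+ 2 - q + s 0%N 1%N 0%N * s 1%N 2%N 2%N - s 0%N 2%N 0%N * s 1%N 1%N 2%N + s 1%N 1%N 0%N * s 2%N 2%N 0%N - s 1%N 2%N 0%N ^+ 2 = 0.
Proof.
move=> H; have HB : forall x m c d b, Bas k x m (c,d,b) = dl k c x * lv (dln k m) d b by move=> *; rewrite ffunE.
have E := Alt3E H i1 i1 i2.
rewrite !subZE !(outS3 _ _ (HB i1 i0)) !HB in E; cbv [S3 Kmod sv lv dl dln eps mu1 mu2 nat_of_ord fst snd] in E.
move/eqP: E; rewrite -subr_eq0 => /eqP E; tok k E.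
apply: (@lin_step _ _ _ 1 E); kring k.
Qed.

Lemma rawR10201 s h q :
  Alt3 (IdY (Ymod s h) (YId (Ymod s h) (Bas k i1 i0)) - q *: Bas k i1 i0) ->
  0 - s 0%N 1%N 2%N * s 1%N 2%N 1%N + s 0%N 2%N 2%N * s 1%N 1%N 1%N + s 1%N 1%N 1%N * s 2%N 2%N 0%N - s 1%N 2%N 0%N * s 1%N 2%N 1%N = 0.
Proof.
move=> H; have HB : forall x m c d b, Bas k x m (c,d,b) = dl k c x * lv (dln k m) d b by move=> *; rewrite ffunE.
have E := Alt3E H i2 i0 i1.
rewrite !subZE !(outS3 _ _ (HB i1 i0)) !HB in E; cbv [S3 Kmod sv lv dl dln eps mu1 mu2 nat_of_ord fst snd] in E.
move/eqP: E; rewrite -subr_eq0 => /eqP E; tok k E.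
apply: (@lin_step _ _ _ 1 E); kring k.
Qed.

Lemma rawR10202 s h q :
  Alt3 (IdY (Ymod s h) (YId (Ymod s h) (Bas k i1 i0)) - q *: Bas k i1 i0) ->
  s 0%N 1%N 1%N * s 1%N 2%N 1%N - s 0%N 2%N 1%N * s 1%N 1%N 1%N + s 1%N 1%N 0%N * s 1%N 2%N 1%N - s 1%N 1%N 1%N * s 1%N 2%N 0%N = 0.
Proof.
move=> H; have HB : forall x m c d b, Bas k x m (c,d,b) = dl k c x * lv (dln k m) d b by move=> *; rewrite ffunE.
have E := Alt3E H i2 i0 i2.
rewrite !subZE !(outS3 _ _ (HB i1 i0)) !HB in E; cbv [S3 Kmod sv lv dl dln eps mu1 mu2 nat_of_ord fst snd] in E.
move/eqP: E; rewrite -subr_eq0 => /eqP E; tok k E.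
apply: (@lin_step _ _ _ 1 E); kring k.
Qed.

Lemma rawR11001 s h q :
  Alt3 (IdY (Ymod s h) (YId (Ymod s h) (Bas k i1 i1)) - q *: Bas k i1 i1) ->
  s 0%N 1%N 1%N * s 2%N 2%N 2%N - s 0%N 2%N 2%N * s 1%N 2%N 1%N = 0.
Proof.
move=> H; have HB : forall x m c d b, Bas k x m (c,d,b) = dl k c x * lv (dln k m) d b by move=> *; rewrite ffunE.
have E := Alt3E H i0 i0 i1.
rewrite !subZE !(outS3 _ _ (HB i1 i1)) !HB in E; cbv [S3 Kmod sv lv dl dln eps mu1 mu2 nat_of_ord fst snd] in E.
move/eqP: E; rewrite -subr_eq0 => /eqP E; tok k E.
apply: (@lin_step _ _ _ 1 E); kring k.
Qed.

Lemma rawR11101 s h q :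
  Alt3 (IdY (Ymod s h) (YId (Ymod s h) (Bas k i1 i1)) - q *: Bas k i1 i1) ->
  0 - s 0%N 0%N 2%N * s 1%N 2%N 2%N - s 0%N 1%N 0%N * s 2%N 2%N 2%N + s 0%N 1%N 2%N * s 0%N 2%N 2%N + s 0%N 2%N 2%N * s 1%N 2%N 0%N = 0.
Proof.
move=> H; have HB : forall x m c d b, Bas k x m (c,d,b) = dl k c x * lv (dln k m) d b by move=> *; rewrite ffunE.
have E := Alt3E H i1 i0 i1.
rewrite !subZE !(outS3 _ _ (HB i1 i1)) !HB in E; cbv [S3 Kmod sv lv dl dln eps mu1 mu2 nat_of_ord fst snd] in E.
move/eqP: E; rewrite -subr_eq0 => /eqP E; tok k E.
apply: (@lin_step _ _ _ 1 E); kring k.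
Qed.

Lemma rawR11201 s h q :
  Alt3 (IdY (Ymod s h) (YId (Ymod s h) (Bas k i1 i1)) - q *: Bas k i1 i1) ->
  s 0%N 0%N 2%N * s 1%N 2%N 1%N - s 0%N 1%N 1%N * s 0%N 2%N 2%N - s 0%N 1%N 1%N * s 2%N 2%N 0%N + s 0%N 2%N 0%N * s 1%N 2%N 1%N = 0.
Proof.
move=> H; have HB : forall x m c d b, Bas k x m (c,d,b) = dl k c x * lv (dln k m) d b by move=> *; rewrite ffunE.
have E := Alt3E H i2 i0 i1.
rewrite !subZE !(outS3 _ _ (HB i1 i1)) !HB in E; cbv [S3 Kmod sv lv dl dln eps mu1 mu2 nat_of_ord fst snd] in E.
move/eqP: E; rewrite -subr_eq0 => /eqP E; tok k E.
apply: (@lin_step _ _ _ 1 E); kring k.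
Qed.

Lemma rawR11202 s h q :
  Alt3 (IdY (Ymod s h) (YId (Ymod s h) (Bas k i1 i1)) - q *: Bas k i1 i1) ->
  0 - s 0%N 0%N 1%N * s 1%N 2%N 1%N - s 0%N 1%N 0%N * s 1%N 2%N 1%N + s 0%N 1%N 1%N * s 0%N 2%N 1%N + s 0%N 1%N 1%N * s 1%N 2%N 0%N = 0.
Proof.
move=> H; have HB : forall x m c d b, Bas k x m (c,d,b) = dl k c x * lv (dln k m) d b by move=> *; rewrite ffunE.
have E := Alt3E H i2 i0 i2.
rewrite !subZE !(outS3 _ _ (HB i1 i1)) !HB in E; cbv [S3 Kmod sv lv dl dln eps mu1 mu2 nat_of_ord fst snd] in E.
move/eqP: E; rewrite -subr_eq0 => /eqP E; tok k E.
apply: (@lin_step _ _ _ 1 E); kring k.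
Qed.

Lemma rawR12001 s h q :
  Alt3 (IdY (Ymod s h) (YId (Ymod s h) (Bas k i1 i2)) - q *: Bas k i1 i2) ->
  0 - s 0%N 1%N 1%N * s 1%N 2%N 2%N + s 0%N 2%N 2%N * s 1%N 1%N 1%N = 0.
Proof.
move=> H; have HB : forall x m c d b, Bas k x m (c,d,b) = dl k c x * lv (dln k m) d b by move=> *; rewrite ffunE.
have E := Alt3E H i0 i0 i1.
rewrite !subZE !(outS3 _ _ (HB i1 i2)) !HB in E; cbv [S3 Kmod sv lv dl dln eps mu1 mu2 nat_of_ord fst snd] in E.
move/eqP: E; rewrite -subr_eq0 => /eqP E; tok k E.
apply: (@lin_step _ _ _ 1 E); kring k.
Qed.

Lemma rawR12002 s h q :
  Alt3 (IdY (Ymod s h) (YId (Ymod s h) (Bas k i1 i2)) - q *: Bas k i1 i2) ->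
  s 0%N 1%N 1%N * s 1%N 1%N 2%N + s 0%N 1%N 1%N * s 1%N 2%N 1%N - s 0%N 1%N 2%N * s 1%N 1%N 1%N - s 0%N 2%N 1%N * s 1%N 1%N 1%N = 0.
Proof.
move=> H; have HB : forall x m c d b, Bas k x m (c,d,b) = dl k c x * lv (dln k m) d b by move=> *; rewrite ffunE.
have E := Alt3E H i0 i0 i2.
rewrite !subZE !(outS3 _ _ (HB i1 i2)) !HB in E; cbv [S3 Kmod sv lv dl dln eps mu1 mu2 nat_of_ord fst snd] in E.
move/eqP: E; rewrite -subr_eq0 => /eqP E; tok k E.
apply: (@lin_step _ _ _ 1 E); kring k.
Qed.

Lemma rawR12102 s h q :
  Alt3 (IdY (Ymod s h) (YId (Ymod s h) (Bas k i1 i2)) - q *: Bas k i1 i2) ->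
  0 - s 0%N 0%N 1%N * s 1%N 1%N 2%N - s 0%N 1%N 0%N * s 1%N 1%N 2%N - s 0%N 1%N 0%N * s 1%N 2%N 1%N + s 0%N 1%N 1%N * s 0%N 1%N 2%N - s 0%N 1%N 1%N * s 1%N 2%N 0%N + s 0%N 1%N 2%N * s 1%N 1%N 0%N + s 0%N 2%N 0%N * s 1%N 1%N 1%N + s 0%N 2%N 1%N * s 1%N 1%N 0%N = 0.
Proof.
move=> H; have HB : forall x m c d b, Bas k x m (c,d,b) = dl k c x * lv (dln k m) d b by move=> *; rewrite ffunE.
have E := Alt3E H i1 i0 i2.
rewrite !subZE !(outS3 _ _ (HB i1 i2)) !HB in E; cbv [S3 Kmod sv lv dl dln eps mu1 mu2 nat_of_ord fst snd] in E.
move/eqP: E; rewrite -subr_eq0 => /eqP E; tok k E.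
apply: (@lin_step _ _ _ 1 E); kring k.
Qed.

Lemma rawR12112 s h q :
  Alt3 (IdY (Ymod s h) (YId (Ymod s h) (Bas k i1 i2)) - q *: Bas k i1 i2) ->
  s 0%N 0%N 0%N * s 1%N 1%N 2%N - s 0%N 1%N 0%N * s 0%N 1%N 2%N + s 0%N 1%N 0%N * s 1%N 2%N 0%N - s 0%N 2%N 0%N * s 1%N 1%N 0%N = 0.
Proof.
move=> H; have HB : forall x m c d b, Bas k x m (c,d,b) = dl k c x * lv (dln k m) d b by move=> *; rewrite ffunE.
have E := Alt3E H i1 i1 i2.
rewrite !subZE !(outS3 _ _ (HB i1 i2)) !HB in E; cbv [S3 Kmod sv lv dl dln eps mu1 mu2 nat_of_ord fst snd] in E.
move/eqP: E; rewrite -subr_eq0 => /eqP E; tok k E.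
apply: (@lin_step _ _ _ 1 E); kring k.
Qed.

Lemma rawR12202 s h q :
  Alt3 (IdY (Ymod s h) (YId (Ymod s h) (Bas k i1 i2)) - q *: Bas k i1 i2) ->
  s 0%N 0%N 1%N * s 1%N 1%N 1%N + s 0%N 1%N 0%N * s 1%N 1%N 1%N - s 0%N 1%N 1%N * s 1%N 1%N 0%N - s 0%N 1%N 1%N ^+ 2 = 0.
Proof.
move=> H; have HB : forall x m c d b, Bas k x m (c,d,b) = dl k c x * lv (dln k m) d b by move=> *; rewrite ffunE.
have E := Alt3E H i2 i0 i2.
rewrite !subZE !(outS3 _ _ (HB i1 i2)) !HB in E; cbv [S3 Kmod sv lv dl dln eps mu1 mu2 nat_of_ord fst snd] in E.
move/eqP: E; rewrite -subr_eq0 => /eqP E; tok k E.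
apply: (@lin_step _ _ _ 1 E); kring k.
Qed.

Lemma rawR20001 s h q :
  Alt3 (IdY (Ymod s h) (YId (Ymod s h) (Bas k i2 i0)) - q *: Bas k i2 i0) ->
  0 - s 1%N 1%N 2%N * s 2%N 2%N 2%N - s 1%N 2%N 1%N * s 2%N 2%N 2%N + s 1%N 2%N 2%N * s 2%N 2%N 1%N + s 1%N 2%N 2%N ^+ 2 = 0.
Proof.
move=> H; have HB : forall x m c d b, Bas k x m (c,d,b) = dl k c x * lv (dln k m) d b by move=> *; rewrite ffunE.
have E := Alt3E H i0 i0 i1.
rewrite !subZE !(outS3 _ _ (HB i2 i0)) !HB in E; cbv [S3 Kmod sv lv dl dln eps mu1 mu2 nat_of_ord fst snd] in E.
move/eqP: E; rewrite -subr_eq0 => /eqP E; tok k E.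
apply: (@lin_step _ _ _ 1 E); kring k.
Qed.

Lemma rawR20101 s h q :
  Alt3 (IdY (Ymod s h) (YId (Ymod s h) (Bas k i2 i0)) - q *: Bas k i2 i0) ->
  s 0%N 1%N 2%N * s 2%N 2%N 2%N - s 0%N 2%N 2%N * s 1%N 2%N 2%N + s 1%N 2%N 0%N * s 2%N 2%N 2%N - s 1%N 2%N 2%N * s 2%N 2%N 0%N = 0.
Proof.
move=> H; have HB : forall x m c d b, Bas k x m (c,d,b) = dl k c x * lv (dln k m) d b by move=> *; rewrite ffunE.
have E := Alt3E H i1 i0 i1.
rewrite !subZE !(outS3 _ _ (HB i2 i0)) !HB in E; cbv [S3 Kmod sv lv dl dln eps mu1 mu2 nat_of_ord fst snd] in E.
move/eqP: E; rewrite -subr_eq0 => /eqP E; tok k E.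
apply: (@lin_step _ _ _ 1 E); kring k.
Qed.

Lemma rawR20201 s h q :
  Alt3 (IdY (Ymod s h) (YId (Ymod s h) (Bas k i2 i0)) - q *: Bas k i2 i0) ->
  0 - s 0%N 1%N 2%N * s 2%N 2%N 1%N + s 0%N 2%N 2%N * s 1%N 2%N 1%N + s 1%N 1%N 0%N * s 2%N 2%N 2%N + s 1%N 1%N 2%N * s 2%N 2%N 0%N - 2%:R * s 1%N 2%N 0%N * s 1%N 2%N 2%N - s 1%N 2%N 0%N * s 2%N 2%N 1%N + s 1%N 2%N 1%N * s 2%N 2%N 0%N = 0.
Proof.
move=> H; have HB : forall x m c d b, Bas k x m (c,d,b) = dl k c x * lv (dln k m) d b by move=> *; rewrite ffunE.
have E := Alt3E H i2 i0 i1.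
rewrite !subZE !(outS3 _ _ (HB i2 i0)) !HB in E; cbv [S3 Kmod sv lv dl dln eps mu1 mu2 nat_of_ord fst snd] in E.
move/eqP: E; rewrite -subr_eq0 => /eqP E; tok k E.
apply: (@lin_step _ _ _ 1 E); kring k.
Qed.

Lemma rawR20212 s h q :
  Alt3 (IdY (Ymod s h) (YId (Ymod s h) (Bas k i2 i0)) - q *: Bas k i2 i0) ->
  h ^+ 2 - q - s 0%N 1%N 0%N * s 2%N 2%N 1%N + s 0%N 2%N 0%N * s 1%N 2%N 1%N + s 1%N 1%N 0%N * s 2%N 2%N 0%N - s 1%N 2%N 0%N ^+ 2 = 0.
Proof.
move=> H; have HB : forall x m c d b, Bas k x m (c,d,b) = dl k c x * lv (dln k m) d b by move=> *; rewrite ffunE.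
have E := Alt3E H i2 i1 i2.
rewrite !subZE !(outS3 _ _ (HB i2 i0)) !HB in E; cbv [S3 Kmod sv lv dl dln eps mu1 mu2 nat_of_ord fst snd] in E.
move/eqP: E; rewrite -subr_eq0 => /eqP E; tok k E.
apply: (@lin_step _ _ _ 1 E); kring k.
Qed.

Lemma rawR21001 s h q :
  Alt3 (IdY (Ymod s h) (YId (Ymod s h) (Bas k i2 i1)) - q *: Bas k i2 i1) ->
  s 0%N 1%N 2%N * s 2%N 2%N 2%N + s 0%N 2%N 1%N * s 2%N 2%N 2%N - s 0%N 2%N 2%N * s 1%N 2%N 2%N - s 0%N 2%N 2%N * s 2%N 2%N 1%N = 0.
Proof.
move=> H; have HB : forall x m c d b, Bas k x m (c,d,b) = dl k c x * lv (dln k m) d b by move=> *; rewrite ffunE.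
have E := Alt3E H i0 i0 i1.
rewrite !subZE !(outS3 _ _ (HB i2 i1)) !HB in E; cbv [S3 Kmod sv lv dl dln eps mu1 mu2 nat_of_ord fst snd] in E.
move/eqP: E; rewrite -subr_eq0 => /eqP E; tok k E.
apply: (@lin_step _ _ _ 1 E); kring k.
Qed.

Lemma rawR21101 s h q :
  Alt3 (IdY (Ymod s h) (YId (Ymod s h) (Bas k i2 i1)) - q *: Bas k i2 i1) ->
  0 - s 0%N 0%N 2%N * s 2%N 2%N 2%N - s 0%N 2%N 0%N * s 2%N 2%N 2%N + s 0%N 2%N 2%N * s 2%N 2%N 0%N + s 0%N 2%N 2%N ^+ 2 = 0.
Proof.
move=> H; have HB : forall x m c d b, Bas k x m (c,d,b) = dl k c x * lv (dln k m) d b by move=> *; rewrite ffunE.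
have E := Alt3E H i1 i0 i1.
rewrite !subZE !(outS3 _ _ (HB i2 i1)) !HB in E; cbv [S3 Kmod sv lv dl dln eps mu1 mu2 nat_of_ord fst snd] in E.
move/eqP: E; rewrite -subr_eq0 => /eqP E; tok k E.
apply: (@lin_step _ _ _ 1 E); kring k.
Qed.

Lemma rawR21201 s h q :
  Alt3 (IdY (Ymod s h) (YId (Ymod s h) (Bas k i2 i1)) - q *: Bas k i2 i1) ->
  s 0%N 0%N 2%N * s 2%N 2%N 1%N - s 0%N 1%N 0%N * s 2%N 2%N 2%N - s 0%N 1%N 2%N * s 2%N 2%N 0%N + s 0%N 2%N 0%N * s 1%N 2%N 2%N + s 0%N 2%N 0%N * s 2%N 2%N 1%N - s 0%N 2%N 1%N * s 0%N 2%N 2%N - s 0%N 2%N 1%N * s 2%N 2%N 0%N + s 0%N 2%N 2%N * s 1%N 2%N 0%N = 0.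
Proof.
move=> H; have HB : forall x m c d b, Bas k x m (c,d,b) = dl k c x * lv (dln k m) d b by move=> *; rewrite ffunE.
have E := Alt3E H i2 i0 i1.
rewrite !subZE !(outS3 _ _ (HB i2 i1)) !HB in E; cbv [S3 Kmod sv lv dl dln eps mu1 mu2 nat_of_ord fst snd] in E.
move/eqP: E; rewrite -subr_eq0 => /eqP E; tok k E.
apply: (@lin_step _ _ _ 1 E); kring k.
Qed.

Lemma rawR21212 s h q :
  Alt3 (IdY (Ymod s h) (YId (Ymod s h) (Bas k i2 i1)) - q *: Bas k i2 i1) ->
  s 0%N 0%N 0%N * s 2%N 2%N 1%N - s 0%N 1%N 0%N * s 2%N 2%N 0%N - s 0%N 2%N 0%N * s 0%N 2%N 1%N + s 0%N 2%N 0%N * s 1%N 2%N 0%N = 0.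
Proof.
move=> H; have HB : forall x m c d b, Bas k x m (c,d,b) = dl k c x * lv (dln k m) d b by move=> *; rewrite ffunE.
have E := Alt3E H i2 i1 i2.
rewrite !subZE !(outS3 _ _ (HB i2 i1)) !HB in E; cbv [S3 Kmod sv lv dl dln eps mu1 mu2 nat_of_ord fst snd] in E.
move/eqP: E; rewrite -subr_eq0 => /eqP E; tok k E.
apply: (@lin_step _ _ _ 1 E); kring k.
Qed.

Lemma rawR22102 s h q :
  Alt3 (IdY (Ymod s h) (YId (Ymod s h) (Bas k i2 i2)) - q *: Bas k i2 i2) ->
  0 - s 0%N 0%N 1%N * s 1%N 2%N 2%N - s 0%N 1%N 0%N * s 1%N 2%N 2%N + s 0%N 1%N 1%N * s 0%N 2%N 2%N + s 0%N 2%N 2%N * s 1%N 1%N 0%N = 0.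
Proof.
move=> H; have HB : forall x m c d b, Bas k x m (c,d,b) = dl k c x * lv (dln k m) d b by move=> *; rewrite ffunE.
have E := Alt3E H i1 i0 i2.
rewrite !subZE !(outS3 _ _ (HB i2 i2)) !HB in E; cbv [S3 Kmod sv lv dl dln eps mu1 mu2 nat_of_ord fst snd] in E.
move/eqP: E; rewrite -subr_eq0 => /eqP E; tok k E.
apply: (@lin_step _ _ _ 1 E); kring k.
Qed.

Lemma EQS s h q :
  (forall x m, Alt3 (IdY (Ymod s h) (YId (Ymod s h) (Bas k x m)) - q *: Bas k x m)) ->
  (forall m m' j j', (m < m' < 3)%N -> (j < j' < 6)%N -> Pn s m j * Pn s m' j' = Pn s m j' * Pn s m' j)
  /\ 4%:R * (h ^+ 2 - q) + DeltaPn s = 0.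
Proof.
move=> H.
have R00001 := rawR00001 (H i0 i0).
have R00002 := rawR00002 (H i0 i0).
have R00101 := rawR00101 (H i0 i0).
have R00102 := rawR00102 (H i0 i0).
have R00112 := rawR00112 (H i0 i0).
have R00202 := rawR00202 (H i0 i0).
have R00212 := rawR00212 (H i0 i0).
have R01001 := rawR01001 (H i0 i1).
have R01002 := rawR01002 (H i0 i1).
have R01101 := rawR01101 (H i0 i1).
have R01102 := rawR01102 (H i0 i1).
have R01112 := rawR01112 (H i0 i1).
have R01202 := rawR01202 (H i0 i1).
have R01212 := rawR01212 (H i0 i1).
have R02001 := rawR02001 (H i0 i2).
have R02002 := rawR02002 (H i0 i2).
have R02101 := rawR02101 (H i0 i2).
have R02112 := rawR02112 (H i0 i2).
have R02201 := rawR02201 (H i0 i2).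
have R02202 := rawR02202 (H i0 i2).
have R02212 := rawR02212 (H i0 i2).
have R10001 := rawR10001 (H i1 i0).
have R10002 := rawR10002 (H i1 i0).
have R10101 := rawR10101 (H i1 i0).
have R10102 := rawR10102 (H i1 i0).
have R10112 := rawR10112 (H i1 i0).
have R10201 := rawR10201 (H i1 i0).
have R10202 := rawR10202 (H i1 i0).
have R11001 := rawR11001 (H i1 i1).
have R11101 := rawR11101 (H i1 i1).
have R11201 := rawR11201 (H i1 i1).
have R11202 := rawR11202 (H i1 i1).
have R12001 := rawR12001 (H i1 i2).
have R12002 := rawR12002 (H i1 i2).
have R12102 := rawR12102 (H i1 i2).
have R12112 := rawR12112 (H i1 i2).
have R12202 := rawR12202 (H i1 i2).
have R20001 := rawR20001 (H i2 i0).
have R20101 := rawR20101 (H i2 i0).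
have R20201 := rawR20201 (H i2 i0).
have R20212 := rawR20212 (H i2 i0).
have R21001 := rawR21001 (H i2 i1).
have R21101 := rawR21101 (H i2 i1).
have R21201 := rawR21201 (H i2 i1).
have R21212 := rawR21212 (H i2 i1).
have R22102 := rawR22102 (H i2 i2).
have M0101 : Pn s 0%N 0%N * Pn s 1%N 1%N = Pn s 0%N 1%N * Pn s 1%N 0%N.
  apply/eqP; rewrite -subr_eq0; apply/eqP; cbv [Pn]. apply: (@lin_step _ _ _ (- 2%:R) R02212). kring k.
have M0102 : Pn s 0%N 0%N * Pn s 1%N 2%N = Pn s 0%N 2%N * Pn s 1%N 0%N.
  apply/eqP; rewrite -subr_eq0; apply/eqP; cbv [Pn]. apply: (@lin_step _ _ _ (2%:R) R02112). kring k.
have M0103 : Pn s 0%N 0%N * Pn s 1%N 3%N = Pn s 0%N 3%N * Pn s 1%N 0%N.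
  apply/eqP; rewrite -subr_eq0; apply/eqP; cbv [Pn]. apply: (@lin_step _ _ _ (4%:R) R02202). kring k.
have M0104 : Pn s 0%N 0%N * Pn s 1%N 4%N = Pn s 0%N 4%N * Pn s 1%N 0%N.
  apply/eqP; rewrite -subr_eq0; apply/eqP; cbv [Pn]. apply: (@lin_step _ _ _ (2%:R) R00212). apply: (@lin_step _ _ _ (- 2%:R) R01202). apply: (@lin_step _ _ _ (2%:R) R12112). kring k.
have M0105 : Pn s 0%N 0%N * Pn s 1%N 5%N = Pn s 0%N 5%N * Pn s 1%N 0%N.
  apply/eqP; rewrite -subr_eq0; apply/eqP; cbv [Pn]. apply: (@lin_step _ _ _ (4%:R) R02101). kring k.
have M0112 : Pn s 0%N 1%N * Pn s 1%N 2%N = Pn s 0%N 2%N * Pn s 1%N 1%N.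
  apply/eqP; rewrite -subr_eq0; apply/eqP; cbv [Pn]. apply: (@lin_step _ _ _ (1%:R) R02201). apply: (@lin_step _ _ _ (1%:R) R12112). kring k.
have M0113 : Pn s 0%N 1%N * Pn s 1%N 3%N = Pn s 0%N 3%N * Pn s 1%N 1%N.
  apply/eqP; rewrite -subr_eq0; apply/eqP; cbv [Pn]. apply: (@lin_step _ _ _ (2%:R) R12202). kring k.
have M0114 : Pn s 0%N 1%N * Pn s 1%N 4%N = Pn s 0%N 4%N * Pn s 1%N 1%N.
  apply/eqP; rewrite -subr_eq0; apply/eqP; cbv [Pn]. apply: (@lin_step _ _ _ (- 1%:R) R00202). apply: (@lin_step _ _ _ (- 1%:R) R11202). apply: (@lin_step _ _ _ (- 1%:R) R12102). kring k.
have M0115 : Pn s 0%N 1%N * Pn s 1%N 5%N = Pn s 0%N 5%N * Pn s 1%N 1%N.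
  apply/eqP; rewrite -subr_eq0; apply/eqP; cbv [Pn]. apply: (@lin_step _ _ _ (- 2%:R) R22102). kring k.
have M0123 : Pn s 0%N 2%N * Pn s 1%N 3%N = Pn s 0%N 3%N * Pn s 1%N 2%N.
  apply/eqP; rewrite -subr_eq0; apply/eqP; cbv [Pn]. apply: (@lin_step _ _ _ (- 2%:R) R00202). apply: (@lin_step _ _ _ (- 2%:R) R02002). apply: (@lin_step _ _ _ (- 2%:R) R11202). kring k.
have M0124 : Pn s 0%N 2%N * Pn s 1%N 4%N = Pn s 0%N 4%N * Pn s 1%N 2%N.
  apply/eqP; rewrite -subr_eq0; apply/eqP; cbv [Pn]. apply: (@lin_step _ _ _ (- 1%:R) R00102). apply: (@lin_step _ _ _ (1%:R) R02001). apply: (@lin_step _ _ _ (- 1%:R) R10112). apply: (@lin_step _ _ _ (1%:R) R11201). apply: (@lin_step _ _ _ (1%:R) R20212). apply: (@lin_step _ _ _ (- 1%:R) R22102). kring k.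
have M0125 : Pn s 0%N 2%N * Pn s 1%N 5%N = Pn s 0%N 5%N * Pn s 1%N 2%N.
  apply/eqP; rewrite -subr_eq0; apply/eqP; cbv [Pn]. apply: (@lin_step _ _ _ (- 2%:R) R00101). apply: (@lin_step _ _ _ (- 2%:R) R11101). kring k.
have M0134 : Pn s 0%N 3%N * Pn s 1%N 4%N = Pn s 0%N 4%N * Pn s 1%N 3%N.
  apply/eqP; rewrite -subr_eq0; apply/eqP; cbv [Pn]. apply: (@lin_step _ _ _ (2%:R) R12002). kring k.
have M0135 : Pn s 0%N 3%N * Pn s 1%N 5%N = Pn s 0%N 5%N * Pn s 1%N 3%N.
  apply/eqP; rewrite -subr_eq0; apply/eqP; cbv [Pn]. apply: (@lin_step _ _ _ (- 4%:R) R12001). kring k.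
have M0145 : Pn s 0%N 4%N * Pn s 1%N 5%N = Pn s 0%N 5%N * Pn s 1%N 4%N.
  apply/eqP; rewrite -subr_eq0; apply/eqP; cbv [Pn]. apply: (@lin_step _ _ _ (2%:R) R00001). apply: (@lin_step _ _ _ (2%:R) R11001). kring k.
have M0201 : Pn s 0%N 0%N * Pn s 2%N 1%N = Pn s 0%N 1%N * Pn s 2%N 0%N.
  apply/eqP; rewrite -subr_eq0; apply/eqP; cbv [Pn]. apply: (@lin_step _ _ _ (2%:R) R01212). kring k.
have M0202 : Pn s 0%N 0%N * Pn s 2%N 2%N = Pn s 0%N 2%N * Pn s 2%N 0%N.
  apply/eqP; rewrite -subr_eq0; apply/eqP; cbv [Pn]. apply: (@lin_step _ _ _ (- 2%:R) R01112). kring k.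
have M0203 : Pn s 0%N 0%N * Pn s 2%N 3%N = Pn s 0%N 3%N * Pn s 2%N 0%N.
  apply/eqP; rewrite -subr_eq0; apply/eqP; cbv [Pn]. apply: (@lin_step _ _ _ (- 4%:R) R01202). kring k.
have M0204 : Pn s 0%N 0%N * Pn s 2%N 4%N = Pn s 0%N 4%N * Pn s 2%N 0%N.
  apply/eqP; rewrite -subr_eq0; apply/eqP; cbv [Pn]. apply: (@lin_step _ _ _ (2%:R) R00112). apply: (@lin_step _ _ _ (2%:R) R02101). apply: (@lin_step _ _ _ (2%:R) R21212). kring k.
have M0205 : Pn s 0%N 0%N * Pn s 2%N 5%N = Pn s 0%N 5%N * Pn s 2%N 0%N.
  apply/eqP; rewrite -subr_eq0; apply/eqP; cbv [Pn]. apply: (@lin_step _ _ _ (- 4%:R) R01101). kring k.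
have M0212 : Pn s 0%N 1%N * Pn s 2%N 2%N = Pn s 0%N 2%N * Pn s 2%N 1%N.
  apply/eqP; rewrite -subr_eq0; apply/eqP; cbv [Pn]. apply: (@lin_step _ _ _ (1%:R) R01102). apply: (@lin_step _ _ _ (- 1%:R) R21212). kring k.
have M0213 : Pn s 0%N 1%N * Pn s 2%N 3%N = Pn s 0%N 3%N * Pn s 2%N 1%N.
  apply/eqP; rewrite -subr_eq0; apply/eqP; cbv [Pn]. apply: (@lin_step _ _ _ (- 2%:R) R11202). kring k.
have M0214 : Pn s 0%N 1%N * Pn s 2%N 4%N = Pn s 0%N 4%N * Pn s 2%N 1%N.
  apply/eqP; rewrite -subr_eq0; apply/eqP; cbv [Pn]. apply: (@lin_step _ _ _ (- 1%:R) R00102). apply: (@lin_step _ _ _ (- 1%:R) R01002). apply: (@lin_step _ _ _ (1%:R) R11201). apply: (@lin_step _ _ _ (- 1%:R) R22102). kring k.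
have M0215 : Pn s 0%N 1%N * Pn s 2%N 5%N = Pn s 0%N 5%N * Pn s 2%N 1%N.
  apply/eqP; rewrite -subr_eq0; apply/eqP; cbv [Pn]. apply: (@lin_step _ _ _ (2%:R) R01001). apply: (@lin_step _ _ _ (- 2%:R) R11101). kring k.
have M0223 : Pn s 0%N 2%N * Pn s 2%N 3%N = Pn s 0%N 3%N * Pn s 2%N 2%N.
  apply/eqP; rewrite -subr_eq0; apply/eqP; cbv [Pn]. apply: (@lin_step _ _ _ (2%:R) R11201). kring k.
have M0224 : Pn s 0%N 2%N * Pn s 2%N 4%N = Pn s 0%N 4%N * Pn s 2%N 2%N.
  apply/eqP; rewrite -subr_eq0; apply/eqP; cbv [Pn]. apply: (@lin_step _ _ _ (- 1%:R) R11101). apply: (@lin_step _ _ _ (1%:R) R21201). kring k.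
have M0225 : Pn s 0%N 2%N * Pn s 2%N 5%N = Pn s 0%N 5%N * Pn s 2%N 2%N.
  apply/eqP; rewrite -subr_eq0; apply/eqP; cbv [Pn]. apply: (@lin_step _ _ _ (- 2%:R) R21101). kring k.
have M0234 : Pn s 0%N 3%N * Pn s 2%N 4%N = Pn s 0%N 4%N * Pn s 2%N 3%N.
  apply/eqP; rewrite -subr_eq0; apply/eqP; cbv [Pn]. apply: (@lin_step _ _ _ (2%:R) R00002). apply: (@lin_step _ _ _ (- 2%:R) R12001). kring k.
have M0235 : Pn s 0%N 3%N * Pn s 2%N 5%N = Pn s 0%N 5%N * Pn s 2%N 3%N.
  apply/eqP; rewrite -subr_eq0; apply/eqP; cbv [Pn]. apply: (@lin_step _ _ _ (4%:R) R11001). kring k.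
have M0245 : Pn s 0%N 4%N * Pn s 2%N 5%N = Pn s 0%N 5%N * Pn s 2%N 4%N.
  apply/eqP; rewrite -subr_eq0; apply/eqP; cbv [Pn]. apply: (@lin_step _ _ _ (2%:R) R21001). kring k.
have M1201 : Pn s 1%N 0%N * Pn s 2%N 1%N = Pn s 1%N 1%N * Pn s 2%N 0%N.
  apply/eqP; rewrite -subr_eq0; apply/eqP; cbv [Pn]. apply: (@lin_step _ _ _ (- 2%:R) R00212). kring k.
have M1202 : Pn s 1%N 0%N * Pn s 2%N 2%N = Pn s 1%N 2%N * Pn s 2%N 0%N.
  apply/eqP; rewrite -subr_eq0; apply/eqP; cbv [Pn]. apply: (@lin_step _ _ _ (2%:R) R00112). kring k.
have M1203 : Pn s 1%N 0%N * Pn s 2%N 3%N = Pn s 1%N 3%N * Pn s 2%N 0%N.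
  apply/eqP; rewrite -subr_eq0; apply/eqP; cbv [Pn]. apply: (@lin_step _ _ _ (4%:R) R00202). kring k.
have M1204 : Pn s 1%N 0%N * Pn s 2%N 4%N = Pn s 1%N 4%N * Pn s 2%N 0%N.
  apply/eqP; rewrite -subr_eq0; apply/eqP; cbv [Pn]. apply: (@lin_step _ _ _ (2%:R) R10112). apply: (@lin_step _ _ _ (- 2%:R) R20212). kring k.
have M1205 : Pn s 1%N 0%N * Pn s 2%N 5%N = Pn s 1%N 5%N * Pn s 2%N 0%N.
  apply/eqP; rewrite -subr_eq0; apply/eqP; cbv [Pn]. apply: (@lin_step _ _ _ (4%:R) R00101). kring k.
have M1212 : Pn s 1%N 1%N * Pn s 2%N 2%N = Pn s 1%N 2%N * Pn s 2%N 1%N.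
  apply/eqP; rewrite -subr_eq0; apply/eqP; cbv [Pn]. apply: (@lin_step _ _ _ (- 1%:R) R00102). apply: (@lin_step _ _ _ (1%:R) R20212). kring k.
have M1213 : Pn s 1%N 1%N * Pn s 2%N 3%N = Pn s 1%N 3%N * Pn s 2%N 1%N.
  apply/eqP; rewrite -subr_eq0; apply/eqP; cbv [Pn]. apply: (@lin_step _ _ _ (2%:R) R10202). kring k.
have M1214 : Pn s 1%N 1%N * Pn s 2%N 4%N = Pn s 1%N 4%N * Pn s 2%N 1%N.
  apply/eqP; rewrite -subr_eq0; apply/eqP; cbv [Pn]. apply: (@lin_step _ _ _ (1%:R) R00002). apply: (@lin_step _ _ _ (- 1%:R) R10102). apply: (@lin_step _ _ _ (- 1%:R) R10201). kring k.
have M1215 : Pn s 1%N 1%N * Pn s 2%N 5%N = Pn s 1%N 5%N * Pn s 2%N 1%N.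
  apply/eqP; rewrite -subr_eq0; apply/eqP; cbv [Pn]. apply: (@lin_step _ _ _ (- 2%:R) R00001). apply: (@lin_step _ _ _ (2%:R) R10101). kring k.
have M1223 : Pn s 1%N 2%N * Pn s 2%N 3%N = Pn s 1%N 3%N * Pn s 2%N 2%N.
  apply/eqP; rewrite -subr_eq0; apply/eqP; cbv [Pn]. apply: (@lin_step _ _ _ (- 2%:R) R10201). kring k.
have M1224 : Pn s 1%N 2%N * Pn s 2%N 4%N = Pn s 1%N 4%N * Pn s 2%N 2%N.
  apply/eqP; rewrite -subr_eq0; apply/eqP; cbv [Pn]. apply: (@lin_step _ _ _ (1%:R) R10101). apply: (@lin_step _ _ _ (- 1%:R) R20201). kring k.
have M1225 : Pn s 1%N 2%N * Pn s 2%N 5%N = Pn s 1%N 5%N * Pn s 2%N 2%N.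
  apply/eqP; rewrite -subr_eq0; apply/eqP; cbv [Pn]. apply: (@lin_step _ _ _ (2%:R) R20101). kring k.
have M1234 : Pn s 1%N 3%N * Pn s 2%N 4%N = Pn s 1%N 4%N * Pn s 2%N 3%N.
  apply/eqP; rewrite -subr_eq0; apply/eqP; cbv [Pn]. apply: (@lin_step _ _ _ (2%:R) R10002). kring k.
have M1235 : Pn s 1%N 3%N * Pn s 2%N 5%N = Pn s 1%N 5%N * Pn s 2%N 3%N.
  apply/eqP; rewrite -subr_eq0; apply/eqP; cbv [Pn]. apply: (@lin_step _ _ _ (- 4%:R) R10001). kring k.
have M1245 : Pn s 1%N 4%N * Pn s 2%N 5%N = Pn s 1%N 5%N * Pn s 2%N 4%N.
  apply/eqP; rewrite -subr_eq0; apply/eqP; cbv [Pn]. apply: (@lin_step _ _ _ (- 2%:R) R20001). kring k.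
split; last first.
  cbv [DeltaPn Pn]. apply: (@lin_step _ _ _ (- 2%:R) R00102). apply: (@lin_step _ _ _ (- 2%:R) R01002). apply: (@lin_step _ _ _ (2%:R) R02001). apply: (@lin_step _ _ _ (- 2%:R) R10112). apply: (@lin_step _ _ _ (4%:R) R20212). kring k.
move=> [|[|[|m]]] [|[|[|m']]] [|[|[|[|[|[|j]]]]]] [|[|[|[|[|[|j']]]]]] // _ _; assumption.
Qed.
End EQS.
Section C.
Variable k : fieldType.

Lemma condB_model (c : nat -> k) G h q (hq : q = h ^+ 2 + DeltaC c G) (w : T3 k)
  (Ha : forall x i j, w (x,i,j) = - w (x,j,i)) (Hd : forall x i, w (x,i,i) = 0) :
  Alt3 (IdY (Ymod (sL c G) h) (YId (Ymod (sL c G) h) w) - q *: w).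
Proof.
pose W := fun c d b => lv (fun m => w (c, mu1 m, mu2 m)) d b.
have HW : forall c d b, w (c,d,b) = W c d b.
  by move=> c0 d b; rewrite /W (@lv_anti1 _ (fun d b => w (c0,d,b)) (Ha c0) (Hd c0)).
apply: Alt3I => i j l; rewrite hq !subZE !(outS3 _ _ HW) !HW.
Time (elim/ord3_cases: i; elim/ord3_cases: j; elim/ord3_cases: l;
 cbv [W S3 Kmod sv lv dl sL DeltaC eps mu1 mu2 nat_of_ord fst snd]; kring k).
Qed.
End C.
Section D.
Variable k : fieldType.
Implicit Types (s : nat -> nat -> nat -> k) (h : k).

Lemma condBp_model (c : nat -> k) G h q (hq : q = h ^+ 2 + DeltaC c G) (w : T3 k)
  (Ha : forall x i j, w (i,j,x) = - w (j,i,x)) (Hd : forall x i, w (i,i,x) = 0) :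
  Alt3 (YId (Ymod (sL c G) h) (IdY (Ymod (sL c G) h) w) - q *: w).
Proof.
pose W := fun a c d => lv (fun m => w (mu1 m, mu2 m, d)) a c.
have HW : forall a c d, w (a,c,d) = W a c d.
  by move=> a c0 d; rewrite /W (@lv_anti1 _ (fun a c => w (a,c,d)) (Ha d) (Hd d)).
apply: Alt3I => i j l; rewrite hq !subZE !(out2S3 _ _ HW) !HW.
elim/ord3_cases: i; elim/ord3_cases: j; elim/ord3_cases: l;
 cbv [W S3 Kmod sv lv dl sL DeltaC eps mu1 mu2 nat_of_ord fst snd]; kring k.
Qed.

Lemma braid_coord (c : nat -> k) G h q (hq : q = h ^+ 2 + DeltaC c G) p :
  let Y := Ymod (sL c G) h in
  (IdY Y (YId Y (IdY Y (E3 k p))) - q *: IdY Y (E3 k p)) (i0,i1,i2) =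
  (YId Y (IdY Y (YId Y (E3 k p))) - q *: YId Y (E3 k p)) (i0,i1,i2).
Proof.
move=> Y; rewrite hq !subZE braidLS3 braidRS3 IdY_E3 YId_E3.
case: p => [[p1 p2] p3] /=.
elim/ord3_cases: p1; elim/ord3_cases: p2; elim/ord3_cases: p3;
 cbv [S3 Kmod sv lv dl sL DeltaC nat_of_ord fst snd]; kring k.
Qed.

Lemma Kmod_anti s h a b u v : Kmod s h a b u v = - Kmod s h a b v u.
Proof.
elim/ord3_cases: u; elim/ord3_cases: v; cbv [Kmod lv nat_of_ord]; rewrite ?(dlC _ a) ?(dlC _ b); kring k.
Qed.
Lemma Kmod_diag s h a b u : Kmod s h a b u u = 0.
Proof.
elim/ord3_cases: u; cbv [Kmod lv nat_of_ord]; kring k.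
Qed.
End D.
Section Lin.
Variable k : fieldType.
Implicit Types (s : nat -> nat -> nat -> k) (h : k).

Definition islin (f : T3 k -> T3 k) := forall a x y, f (a *: x + y) = a *: f x + f y.

Lemma subE (f g : T3 k) t : (f - g) t = f t - g t.
Proof. by rewrite !ffunE. Qed.

Lemma addZE (a : k) (f g : T3 k) t : (a *: f + g) t = a * f t + g t.
Proof. by rewrite !ffunE. Qed.

Lemma IdY_islin s h : islin (IdY (Ymod s h)).
Proof.
move=> a x y; apply/ffunP => [[[i j] l]]; rewrite addZE !IdY_Ymod mulr_sumr -big_split /=.
apply: eq_bigr => b _; rewrite mulr_sumr -big_split /=; apply: eq_bigr => c _.
rewrite addZE; kring k.
Qed.

Lemma YId_islin s h : islin (YId (Ymod s h)).
Proof.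
move=> a x y; apply/ffunP => [[[i j] l]]; rewrite addZE !YId_Ymod mulr_sumr -big_split /=.
apply: eq_bigr => b _; rewrite mulr_sumr -big_split /=; apply: eq_bigr => c _.
rewrite addZE; kring k.
Qed.



Lemma lin_sumZ f (Hf : islin f) (I : finType) (c : I -> k) (F : I -> T3 k) :
  f 0 = 0 -> f (\sum_i c i *: F i) = \sum_i c i *: f (F i).
Proof.
move=> f0; apply: (big_rec2 (fun x y => f y = x)) => // i y1 y2 _ <-.
by rewrite Hf.
Qed.

Lemma IdY0 s h : IdY (Ymod s h) 0 = 0.
Proof.
apply/ffunP => [[[i j] l]]; rewrite IdY_Ymod ffunE big1 // => a _; rewrite big1 // => b _.
by rewrite ffunE mul0r.
Qed.

Lemma YId0 s h : YId (Ymod s h) 0 = 0.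
Proof.
apply/ffunP => [[[i j] l]]; rewrite YId_Ymod ffunE big1 // => a _; rewrite big1 // => b _.
by rewrite ffunE mul0r.
Qed.

Lemma E3_dec (u : T3 k) : u = \sum_p u p *: E3 k p.
Proof.
apply/ffunP => t; rewrite sum_ffunE (bigD1 t) //= big1 ?addr0.
  rewrite scaleffE ffunE !dlE !eqxx !mul1r; kring k.
move=> p Hp; rewrite scaleffE ffunE !dlE.
have H : (t.1.1 == p.1.1) && (t.1.2 == p.1.2) && (t.2 == p.2) = false.
  apply/negbTE; move: Hp; apply: contra.
  case: t => [[? ?] ?]; case: p => [[? ?] ?] /=.
  by case/andP => /andP [/eqP -> /eqP ->] /eqP ->.
move: H; case: (t.1.1 == p.1.1); case: (t.1.2 == p.1.2); case: (t.2 == p.2) => //= _;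
  kring k.
Qed.

Lemma Alt3B (t1 t2 : T3 k) : Alt3 t1 -> Alt3 t2 -> Alt3 (t1 - t2).
Proof.
move=> H1 H2; apply: Alt3I => i j l.
rewrite !ffunE (Alt3E H1) (Alt3E H2) (Alt3E H1 i0) (Alt3E H2 i0).
cbv [eps nat_of_ord]; kring k.
Qed.

Lemma IdY_ext (Y Y' : T2 k -> T2 k) : (forall w, Y w = Y' w) -> forall w, IdY Y w = IdY Y' w.
Proof. by move=> H w; apply/ffunP => t; rewrite !ffunE H. Qed.
Lemma YId_ext (Y Y' : T2 k -> T2 k) : (forall w, Y w = Y' w) -> forall w, YId Y w = YId Y' w.
Proof. by move=> H w; apply/ffunP => t; rewrite !ffunE H. Qed.

Lemma braid_model (c : nat -> k) G h q (hq : q = h ^+ 2 + DeltaC c G) u :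
  let Y := Ymod (sL c G) h in
  IdY Y (YId Y (IdY Y u)) - q *: IdY Y u = YId Y (IdY Y (YId Y u)) - q *: YId Y u.
Proof.
move=> Y.
pose Z := fun u => (IdY Y (YId Y (IdY Y u)) - q *: IdY Y u) - (YId Y (IdY Y (YId Y u)) - q *: YId Y u).
have ZA : forall u, Alt3 (Z u).
  move=> v; apply: Alt3B.
    apply: condB_model => //.
      move=> x i j; rewrite !IdY_Ymod -sumrN; apply: eq_bigr => a _; rewrite -sumrN.
      by apply: eq_bigr => b _; rewrite Kmod_anti mulrN.
    move=> x i; rewrite IdY_Ymod big1 // => a _; rewrite big1 // => b _.
    by rewrite Kmod_diag mulr0.
  apply: condBp_model => //.
    move=> x i j; rewrite !YId_Ymod -sumrN; apply: eq_bigr => a _; rewrite -sumrN.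
    by apply: eq_bigr => b _; rewrite Kmod_anti mulrN.
  move=> x i; rewrite YId_Ymod big1 // => a _; rewrite big1 // => b _.
  by rewrite Kmod_diag mulr0.
have Zlin : islin Z.
  have L1 := IdY_islin (sL c G) h; have L2 := YId_islin (sL c G) h.
  move=> a x y; rewrite /Z !(L1, L2).
  apply/ffunP => t; rewrite !ffunE; kring k.
have Z0 : Z 0 = 0 by rewrite /Z !(IdY0, YId0) scaler0 !subrr.
have ZE : forall p, Z (E3 k p) = 0.
  move=> p; apply/ffunP => [[[i j] l]].
  have := braid_coord hq p; rewrite -/Y => H.
  have Z0c : Z (E3 k p) (i0,i1,i2) = 0 by rewrite /Z subE H subrr.
  by rewrite (Alt3E (ZA _)) Z0c mulr0 ffunE.
have : Z u = 0 by rewrite (E3_dec u) lin_sumZ // big1 // => p _; rewrite ZE scaler0.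
by move/eqP; rewrite subr_eq0 => /eqP.
Qed.
End Lin.

Section Final.
Variable k : fieldType.
Hypothesis hchar : (2%:R : k) != 0.
Implicit Types (s : nat -> nat -> nat -> k) (h : k).

Lemma sum2_dl2 (F : 'I_3 -> 'I_3 -> k) i j :
  \sum_(a < 3) \sum_(b < 3) dl k i a * dl k j b * F a b = F i j.
Proof. elim/ord3_cases: i; elim/ord3_cases: j; rewrite !sum3; cbv [dl nat_of_ord]; kring k. Qed.

Lemma E2_tens i j : E2 k i j = tens2 (ev k i) (ev k j).
Proof. by apply/ffunP => [[u v]]; rewrite !ffunE !mxE /= (dlC k u) (dlC k v). Qed.

Lemma condA_model s h (w : T2 k) (Ha : forall i j, w (i,j) = - w (j,i)) (Hd : forall i, w (i,i) = 0) :
  Ymod s h w = (2%:R * h) *: w.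
Proof.
apply/ffunP => [[u v]]; rewrite scaleffE ffunE /= !sum3 !Hd (Ha i1 i0) (Ha i2 i0) (Ha i2 i1).
elim/ord3_cases: u; elim/ord3_cases: v; rewrite ?Hd ?(Ha i1 i0) ?(Ha i2 i0) ?(Ha i2 i1);
 cbv [Kmod sv lv dl nat_of_ord]; kring k.
Qed.

Lemma half_eq (x E : k) : E = 2%:R * x -> x = 2%:R^-1 * E.
Proof. by move=> ->; rewrite mulrA mulVf // mul1r. Qed.

Lemma gexp_of (g : V k -> V k -> k) (gsym : forall x y, g x y = g y x)
  (glin : forall (c : k) x y z, g x (c *: y + z) = c * g x y + g x z) :
  forall x y, g x y = \sum_(i<3) \sum_(j<3) x ord0 i * y ord0 j *
      Gs (fun a b : nat => g (ev k (o3 a)) (ev k (o3 b))) i j.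
Proof.
have g0 : forall x, g x 0 = 0.
  move=> x; have H := glin 1 x 0 0; rewrite scale1r addr0 mul1r in H.
  by move: H; rewrite -{1}[g x 0]addr0 => /addrI <-.
have dec : forall y : V k, y = y ord0 i0 *: ev k i0 + (y ord0 i1 *: ev k i1 + (y ord0 i2 *: ev k i2 + 0)).
  move=> y; apply/rowP => j; rewrite !mxE; elim/ord3_cases: j; cbv [dl nat_of_ord]; kring k.
have lin1 : forall x y, g x y = y ord0 i0 * g x (ev k i0) + y ord0 i1 * g x (ev k i1) + y ord0 i2 * g x (ev k i2).
  move=> x y; rewrite {1}(dec y) !glin g0; kring k.
move=> x y; rewrite lin1 (gsym x (ev k i0)) (gsym x (ev k i1)) (gsym x (ev k i2)).
rewrite (lin1 (ev k i0) x) (lin1 (ev k i1) x) (lin1 (ev k i2) x) !sum3.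
cbv [Gs o3 nat_of_ord].
rewrite (gsym (ev k i1) (ev k i0)) (gsym (ev k i2) (ev k i0)) (gsym (ev k i2) (ev k i1)).
kring k.
Qed.

Lemma bwd (q : k) (Y : {linear T2 k -> T2 k}) (a b : V k) (g : V k -> V k -> k)
  (gsym : forall x y, g x y = g y x)
  (glin : forall (c : k) x y z, g x (c *: y + z) = c * g x y + g x z)
  (hcon : (q - 1) ^+ 2 = - (4%:R * (g a a * g b b - g a b ^+ 2)))
  (hY : forall x y, Y (tens2 x y) = g x y *: wedge2 a b + wedge2 x (g b y *: a - g a y *: b)
        + wedge2 y (g b x *: a - g a x *: b) + ((q + 1) / 2%:R) *: wedge2 x y) :
  (forall w, Y w = Ymod (sL (cab a b) (fun i j : nat => g (ev k (o3 i)) (ev k (o3 j)))) ((q + 1) / 2%:R) w)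
  /\ q = ((q + 1) / 2%:R) ^+ 2 + DeltaC (cab a b) (fun i j : nat => g (ev k (o3 i)) (ev k (o3 j))).
Proof.
have gexp := gexp_of gsym glin.
split.
  move=> w; apply/ffunP => [[u v]]; rewrite Ylin ffunE /=.
  apply: eq_bigr => i _; apply: eq_bigr => j _; congr (_ * _).
  rewrite E2_tens hY (@F1 k a b g _ _ gexp).
  under eq_bigr => i' _ do under eq_bigr => j' _ do rewrite !mxE.
  exact: sum2_dl2.
have D : g a a * g b b - g a b ^+ 2 = DeltaC (cab a b) (fun i j : nat => g (ev k (o3 i)) (ev k (o3 j))).
  rewrite !gexp !sum3; cbv [Gs DeltaC cab mu1 mu2 o3 nat_of_ord]; kring k.
have h4 : (4%:R : k) != 0.
  by rewrite (_ : 4%:R = 2%:R * 2%:R :> k) ?mulf_neq0 // -natrM.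
rewrite -D; apply: (@mulfI _ 4%:R) => //.
rewrite mulrDr (_ : 4%:R * (g a a * g b b - g a b ^+ 2) = - (q - 1) ^+ 2); last by rewrite hcon opprK.
by field.
Qed.
End Final.

Definition idx (i j : nat) : nat :=
  match i, j with 0%N,0%N => 0 | 0%N,1%N => 1 | 0%N,2%N => 2 | 1%N,1%N => 3 | 1%N,2%N => 4 | _,_ => 5 end.

Section Fwd.
Variable k : fieldType.
Hypothesis hchar : (2%:R : k) != 0.
Implicit Types (s : nat -> nat -> nat -> k) (h : k).

Lemma VAlt2_Bas x m : V_Alt2 (Bas k x m).
Proof.
exists 1%N, (fun _ => ev k x), (fun _ => wedge2 (ev k (mu1 m)) (ev k (mu2 m))); split.
  move=> _; exists 1%N, (fun _ => 1), (fun _ => ev k (mu1 m)), (fun _ => ev k (mu2 m)).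
  by rewrite big_ord1 scale1r.
rewrite big_ord1; apply/ffunP => [[[c d] f]]; rewrite !ffunE !mxE /= (dlC k c); congr (_ * _).
elim/ord3_cases: m; elim/ord3_cases: d; elim/ord3_cases: f;
  cbv [lv dln dl mu1 mu2 nat_of_ord]; kring k.
Qed.

Lemma Kmod_ext s s' h
  (H : forall i j m, (i < 3)%N -> (j < 3)%N -> (m < 3)%N -> (i <= j)%N -> s i j m = s' i j m) a b u v :
  Kmod s h a b u v = Kmod s' h a b u v.
Proof.
rewrite /Kmod (@lv_ext _ (sv s a b) (sv s' a b)) //;
 elim/ord3_cases: a; elim/ord3_cases: b; cbv [sv nat_of_ord]; by apply: H.
Qed.

Lemma sL_ext_c (c c' : nat -> k) G i j m :
  c 0%N = c' 0%N -> c 1%N = c' 1%N -> c 2%N = c' 2%N -> sL c G i j m = sL c' G i j m.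
Proof. by move=> H0 H1 H2; rewrite /sL H0 H1 H2. Qed.

Lemma sL_scale (c : nat -> k) (G : nat -> nat -> k) t i j m :
  sL c (fun a b => G a b * t) i j m = t * sL c G i j m.
Proof.
case: i => [|[|[|i]]]; case: j => [|[|[|j]]]; case: m => [|[|[|m]]];
  cbv [sL]; kring k.
Qed.

Lemma fwd (q : k) (Y : {linear T2 k -> T2 k}) (himY : forall w, Alt2 (Y w))
  (condA : forall w : T2 k, Alt2 w -> Y w = (q + 1) *: w)
  (condB : forall w : T3 k, V_Alt2 w -> Alt3 (IdY Y (YId Y w) - q *: w)) :
   exists (a b : V k) (g : V k -> V k -> k),
     (forall x y : V k, g x y = g y x) /\
     (forall (c : k) (x y z : V k), g x (c *: y + z) = c * g x y + g x z) /\
     let Delta := g a a * g b b - g a b ^+ 2 in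
     let T := fun v : V k => g b v *: a - g a v *: b in
     (q - 1) ^+ 2 = - (4%:R * Delta) /\
     (forall x y : V k,
        Y (tens2 x y) = g x y *: wedge2 a b + wedge2 x (T y) + wedge2 y (T x)
                        + ((q + 1) / 2%:R) *: wedge2 x y).
Proof.
have YM := Ymodel_fwd hchar himY condA.
set h := (q + 1) / 2%:R in YM *.
set s := sY Y in YM.
have HB : forall x m, Alt3 (IdY (Ymod s h) (YId (Ymod s h) (Bas k x m)) - q *: Bas k x m).
  move=> x m; rewrite -(YId_ext YM) -(IdY_ext YM).
  by apply: condB; exact: VAlt2_Bas.
case: (EQS HB) => Hmin Hcon.
case: (rank1 Hmin) => c6 [G6 HP].
case: (ab_exists c6) => a [b [ca0 ca1 ca2]].
pose G6' := fun i j : nat => G6 (idx i j).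
pose GN := fun i j : nat => G6' i j * 2%:R^-1.
pose g := fun x y : V k => \sum_(i<3) \sum_(j<3) x ord0 i * y ord0 j * Gs GN i j.
have Keq : forall i j u v, Kmod s h i j u v = Kmod (sL (cab a b) GN) h i j u v.
  apply: Kmod_ext => -[|[|[|i]]] [|[|[|j]]] [|[|[|m]]] // _ _ _ _;
   rewrite (sL_ext_c _ _ _ _ ca0 ca1 ca2) sL_scale; apply: (half_eq hchar);
   cbv [sL G6' idx]; rewrite -!HP //; cbv [Pn]; kring k.
have gexp : forall x y, g x y = \sum_(i<3) \sum_(j<3) x ord0 i * y ord0 j * Gs GN i j by [].
have gsym : forall x y, g x y = g y x.
  by move=> x y; rewrite /g !sum3; cbv [Gs nat_of_ord]; kring k.
have glin : forall (c : k) (x y z : V k), g x (c *: y + z) = c * g x y + g x z.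
  by move=> c x y z; rewrite /g !sum3 !mxE; kring k.
exists a, b, g; split; first exact: gsym.
split; first exact: glin.
move=> Delta T; split; last first.
  move=> x y; apply/ffunP => [[u v]]; rewrite /T YM (@F1 k a b g _ _ gexp) ffunE /=.
  apply: eq_bigr => i _; apply: eq_bigr => j _; by rewrite ffunE Keq.
have h4 : (4%:R : k) != 0.
  by rewrite (_ : 4%:R = 2%:R * 2%:R :> k) ?mulf_neq0 // -natrM.
have D1 : DeltaPn s = DeltaC c6 G6'.
  rewrite /DeltaPn !HP //; cbv [DeltaC G6' idx]; kring k.
have D2 : g a a * g b b - g a b ^+ 2 = DeltaC c6 GN.
  rewrite (_ : DeltaC c6 GN = DeltaC (cab a b) GN); last by rewrite /DeltaC ca0 ca1 ca2.
  rewrite /g !sum3; cbv [Gs DeltaC cab mu1 mu2 nat_of_ord]; kring k.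
have D3 : DeltaC c6 GN = DeltaC c6 G6' / 4%:R.
  by cbv [DeltaC GN]; field; rewrite h4 hchar.
have D4 : DeltaPn s = - (4%:R * (h ^+ 2 - q)).
  apply/eqP; rewrite -subr_eq0; apply/eqP; apply: (@lin_step _ _ _ 1 Hcon); kring k.
rewrite /Delta D2 D3 -D1 D4 /h; by field; rewrite ?h4 ?hchar.
Qed.
End Fwd.

Unset Implicit Arguments.

Theorem proposition3p1 (k : fieldType) (hchar : (2%:R : k) != 0)
    (q : k) (hq : q != 0) (Y : {linear T2 k -> T2 k})
    (himY : forall w : T2 k, Alt2 (Y w)) :
  let condA := forall w : T2 k, Alt2 w -> Y w = (q + 1) *: w in
  let condB := forall w : T3 k, V_Alt2 w -> Alt3 (IdY Y (YId Y w) - q *: w) in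
  ((condA /\ condB) <->
   exists (a b : V k) (g : V k -> V k -> k),
     (forall x y : V k, g x y = g y x) /\
     (forall (c : k) (x y z : V k), g x (c *: y + z) = c * g x y + g x z) /\
     let Delta := g a a * g b b - g a b ^+ 2 in
     let T := fun v : V k => g b v *: a - g a v *: b in
     (q - 1) ^+ 2 = - (4%:R * Delta) /\
     (forall x y : V k,
        Y (tens2 x y) = g x y *: wedge2 a b + wedge2 x (T y) + wedge2 y (T x)
                        + ((q + 1) / 2%:R) *: wedge2 x y))
  /\
  ((condA /\ condB) ->
   forall w : T3 k,
     IdY Y (YId Y (IdY Y w)) - q *: IdY Y w
     = YId Y (IdY Y (YId Y w)) - q *: YId Y w).
Proof.
move=> condA condB.
have BW : (exists (a b : V k) (g : V k -> V k -> k),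
     (forall x y : V k, g x y = g y x) /\
     (forall (c : k) (x y z : V k), g x (c *: y + z) = c * g x y + g x z) /\
     let Delta := g a a * g b b - g a b ^+ 2 in
     let T := fun v : V k => g b v *: a - g a v *: b in
     (q - 1) ^+ 2 = - (4%:R * Delta) /\
     (forall x y : V k,
        Y (tens2 x y) = g x y *: wedge2 a b + wedge2 x (T y) + wedge2 y (T x)
                        + ((q + 1) / 2%:R) *: wedge2 x y)) ->
   exists (c : nat -> k) (G : nat -> nat -> k),
     (forall w, Y w = Ymod (sL c G) ((q + 1) / 2%:R) w) /\ q = ((q + 1) / 2%:R) ^+ 2 + DeltaC c G.
  case=> a [b [g [gsym [glin H]]]]; move: H => /= [hcon hY].
  have [YM qrel] := bwd hchar gsym glin hcon hY.
  by exists (cab a b), (fun i j : nat => g (ev k (o3 i)) (ev k (o3 j))).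
split.
  split.
    case=> HA HB; exact: (fwd hchar himY HA HB).
  move=> /BW [c [G [YM qrel]]]; split.
    move=> w Hw; rewrite YM (condA_model _ _ (Alt2_anti Hw) (Alt2_diag Hw)).
    congr (_ *: _); field; exact: hchar.
  move=> w Hw; rewrite (YId_ext YM) (IdY_ext YM).
  apply: condB_model => //; [exact: VAlt2_anti | exact: VAlt2_diag].
case=> HA HB w.
have [c [G [YM qrel]]] := BW (fwd hchar himY HA HB).
rewrite !(IdY_ext YM) !(YId_ext YM).
exact: braid_model qrel w.
Qed.
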